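(* (i) There is an absolute constant $C$ such that for all integers $m\ge 1$ and all reals $2\le y\le z$, $$\left|\sum_{y\le q\le z}\frac{\Lambda(q)}{q\log^2(mq)}-\left(\frac{1}{\log(my)}-\frac{1}{\log(mz)}\right)\right|\le\frac{C}{\log^2(my)},$$ and consequently, for all integers $m\ge1$ and reals $y\ge 2$, $$\left|\sum_{q\ge y}\frac{\Lambda(q)}{q\log^2(mq)}-\frac{1}{\log(my)}\right|\le\frac{C}{\log^2(my)}.$$ (ii) If $m\ge1$ is an integer with $m=2^x$ for some real $x\ge 1$, then $$\log m\cdot\sum_{q}\frac{\Lambda(q)}{q\log^2(mq)}\le\sum_{j\ge1}\frac{x}{(x+j)^2}\le\frac{x}{x+\frac12}\le 1.$$ (iii) For every integer $m\ge1$, $$\sum_{q}\frac{\Lambda(q)}{q\log(mq)\log(2mq)}\le\frac{1}{\log(2m)}.$$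
   Context: Sums are over natural numbers $q$ (effectively over prime powers $q\ge2$). $\Lambda$ is the von Mangoldt function: $\Lambda(q)=\log p$ if $q=p^j$ for a prime $p$ and $j\ge 1$, and $\Lambda(q)=0$ otherwise. *)

(* Defs.v *)
From Stdlib Require Import Reals ZArith Znumtheory Classical ClassicalEpsilon.
From Coquelicot Require Import Coquelicot.
Open Scope R_scope.

Definition prime_nat (p : nat) : Prop := Znumtheory.prime (Z.of_nat p).

Definition prime_power_of (q p : nat) : Prop :=
  prime_nat p /\ exists j : nat, (1 <= j)%nat /\ q = Nat.pow p j.

Definition vonMangoldt (q : nat) : R :=
  match excluded_middle_informative (exists p, prime_power_of q p) with
  | left H => ln (INR (proj1_sig (constructive_indefinite_description _ H)))
  | right _ => 0
  end.

Definition term (m q : nat) : R :=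
  vonMangoldt q / (INR q * (ln (INR m * INR q)) ^ 2).

(* sum over natural numbers q with y <= q <= z of f q
   (terms with q > up z are all outside the range since up z > z) *)
Definition sum_between (f : nat -> R) (y z : R) : R :=
  sum_n (fun q => if Rle_dec y (INR q) then
                    if Rle_dec (INR q) z then f q else 0 else 0)
        (Z.to_nat (up z)).

Definition from_y (f : nat -> R) (y : R) : nat -> R :=
  fun q => if Rle_dec y (INR q) then f q else 0.

(* Main.v *)
Require Import Defs.
From Stdlib Require Import Reals.
From Coquelicot Require Import Coquelicot.
From Stdlib Require Import ZArith Znumtheory Lia Lra Zpow_facts Classical ClassicalEpsilon.
Open Scope R_scope.

Module NT.
Local Open Scope nat_scope.

Lemma nat_Z_divide (a b : nat) : Nat.divide a b <-> Z.divide (Z.of_nat a) (Z.of_nat b).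
Proof.
  split.
  - intros [k Hk]. exists (Z.of_nat k). subst. lia.
  - intros [z Hz]. destruct (Nat.eq_dec a 0) as [Ha|Ha].
    + subst. simpl in Hz. exists 0%nat. lia.
    + assert (0 <= z)%Z by nia. exists (Z.to_nat z). nia.
Qed.

Lemma prime_nat_ge2 p : prime_nat p -> (2 <= p)%nat.
Proof. intros H. apply prime_ge_2 in H. lia. Qed.

Lemma prime_nat_mult p a b : prime_nat p -> Nat.divide p (a * b) -> Nat.divide p a \/ Nat.divide p b.
Proof.
  intros Hp Hd. apply nat_Z_divide in Hd. rewrite Nat2Z.inj_mul in Hd.
  destruct (prime_mult _ Hp _ _ Hd); [left|right]; apply nat_Z_divide; auto.
Qed.

Lemma prime_nat_pow p a k : prime_nat p -> Nat.divide p (a ^ k) -> (1 <= k)%nat -> Nat.divide p a.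
Proof.
  intros Hp. induction k as [|k IH]; intros Hd Hk; [lia|].
  simpl in Hd. destruct (prime_nat_mult _ _ _ Hp Hd) as [H|H]; auto.
  destruct k. simpl in H. apply Nat.divide_1_r in H. apply prime_nat_ge2 in Hp. lia.
  apply IH; auto; lia.
Qed.

Lemma prime_nat_div_prime p q : prime_nat p -> prime_nat q -> Nat.divide p q -> p = q.
Proof.
  intros Hp Hq Hd. apply nat_Z_divide in Hd. apply (prime_div_prime _ _ Hp Hq) in Hd. lia.
Qed.

Lemma pp_unique p j q k : prime_nat p -> prime_nat q -> (1 <= j)%nat -> (1 <= k)%nat ->
  p ^ j = q ^ k -> p = q.
Proof.
  intros Hp Hq Hj Hk E.
  assert (Nat.divide p (q ^ k)).
  { rewrite <- E. exists (p ^ (j - 1)). destruct j; [lia|]. simpl. rewrite Nat.sub_0_r. lia. }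
  apply prime_nat_div_prime; auto. eapply prime_nat_pow; eauto.
Qed.

Lemma Lam_pp p j : prime_nat p -> (1 <= j)%nat -> (vonMangoldt (p ^ j) = ln (INR p))%R.
Proof.
  intros Hp Hj. unfold vonMangoldt.
  destruct excluded_middle_informative as [H|H].
  - destruct constructive_indefinite_description as [q [Hq [k [Hk E]]]]. simpl.
    f_equal. f_equal. symmetry. exact (pp_unique p j q k Hp Hq Hj Hk E).
  - exfalso. apply H. exists p. split; auto. exists j. auto.
Qed.

Lemma Lam_cases q : (vonMangoldt q = 0)%R \/
  exists p j, prime_nat p /\ (1 <= j)%nat /\ q = p ^ j /\ (vonMangoldt q = ln (INR p))%R.
Proof.
  destruct (classic (exists p, prime_power_of q p)) as [[p [Hp [j [Hj E]]]]|H].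
  - right. exists p, j. split; [auto|split; [auto|split; [auto|]]]. subst. apply Lam_pp; auto.
  - left. unfold vonMangoldt. destruct excluded_middle_informative; tauto.
Qed.

Lemma Lam_ge0 q : (0 <= vonMangoldt q)%R.
Proof.
  destruct (Lam_cases q) as [H|[p [j [Hp [Hj [E H]]]]]]; rewrite H; [lra|].
  apply prime_nat_ge2 in Hp. rewrite <- ln_1. apply ln_le; [lra|].
  apply le_INR in Hp. simpl in Hp. lra.
Qed.

Lemma pow_ge_self p j : (1 <= p)%nat -> (1 <= j)%nat -> (p <= p ^ j)%nat.
Proof.
  intros Hp Hj. destruct j; [lia|]. simpl.
  assert (1 <= p ^ j)%nat by (apply Nat.pow_le_mono_l with (c:=j) in Hp; rewrite Nat.pow_1_l in Hp; lia).
  nia.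
Qed.

Lemma Lam_le_ln q : (1 <= q)%nat -> (vonMangoldt q <= ln (INR q))%R.
Proof.
  intros Hq. destruct (Lam_cases q) as [H|[p [j [Hp [Hj [E H]]]]]]; rewrite H.
  - rewrite <- ln_1. apply ln_le; [lra|]. apply le_INR in Hq. simpl in Hq. lra.
  - apply prime_nat_ge2 in Hp. apply ln_le. apply lt_0_INR; lia.
    apply le_INR. subst. apply pow_ge_self; lia.
Qed.

Lemma Lam_0 : (vonMangoldt 0 = 0)%R.
Proof.
  destruct (Lam_cases 0) as [H|[p [j [Hp [Hj [E H]]]]]]; auto.
  apply prime_nat_ge2 in Hp. exfalso. assert (p ^ j <> 0) by (apply Nat.pow_nonzero; lia).
  lia.
Qed.

Lemma Lam_1 : (vonMangoldt 1 = 0)%R.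
Proof.
  destruct (Lam_cases 1) as [H|[p [j [Hp [Hj [E H]]]]]]; auto.
  apply prime_nat_ge2 in Hp. exfalso. pose proof (pow_ge_self p j). lia.
Qed.

Definition dvb (d n : nat) : bool := Nat.eqb (n mod d) 0.

Lemma dvb_spec d n : (d <> 0)%nat -> (dvb d n = true <-> Nat.divide d n).
Proof.
  intros Hd. unfold dvb. rewrite Nat.eqb_eq. apply Nat.mod_divide. auto.
Qed.

Definition ell (n : nat) : R := sum_n (fun d => if dvb d n then vonMangoldt d else 0%R) n.

Lemma sum_n_Rplus (u v : nat -> R) n : sum_n (fun k => (u k + v k)%R) n = (sum_n u n + sum_n v n)%R.
Proof. apply (sum_n_plus (G:=R_AbelianMonoid)). Qed.

Lemma sum_n_zero (f : nat -> R) N : (forall k, (k <= N)%nat -> f k = 0%R) -> sum_n f N = 0%R.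
Proof.
  intros H. induction N. rewrite sum_O; auto.
  rewrite sum_Sn, IHN, H; auto. unfold plus; simpl; lra.
Qed.

Lemma sum_delta (d0 N : nat) (c : R) : (d0 <= N)%nat ->
  sum_n (fun d => if Nat.eq_dec d d0 then c else 0%R) N = c.
Proof.
  induction N as [|N IH]; intros H.
  - rewrite sum_O. assert (d0 = 0%nat) by lia. subst. destruct (Nat.eq_dec 0 0); lia || auto.
  - rewrite sum_Sn. destruct (Nat.eq_dec (S N) d0).
    + subst. rewrite sum_n_zero. unfold plus; simpl; lra.
      intros k Hk. destruct (Nat.eq_dec k (S N)); [lia|auto].
    + rewrite IH by lia. unfold plus; simpl; lra.
Qed.


Lemma ell_ext n N : (1 <= n)%nat -> (n <= N)%nat ->
  ell n = sum_n (fun d => if dvb d n then vonMangoldt d else 0%R) N.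
Proof.
  intros Hn HN. unfold ell. induction HN; auto.
  rewrite sum_Sn, <- IHHN. unfold dvb.
  rewrite Nat.mod_small by lia. destruct (Nat.eqb_spec n 0); [lia|]. unfold plus; simpl; lra.
Qed.

Lemma val_exists p k : (2 <= p)%nat -> (1 <= k)%nat ->
  exists v, Nat.divide (p ^ v) k /\ ~ Nat.divide (p ^ S v) k.
Proof.
  intros Hp. induction k as [k IH] using (well_founded_induction lt_wf). intros Hk.
  destruct (Nat.eq_dec (k mod p) 0) as [H|H].
  - apply Nat.mod_divide in H; [|lia]. destruct H as [k' Hk'].
    destruct (IH k') as [v [H1 H2]]; try nia.
    exists (S v). split.
    + simpl. rewrite Hk', (Nat.mul_comm k' p). apply Nat.mul_divide_mono_l. auto.
    + intros H3. apply H2. rewrite Hk' in H3. simpl in H3. rewrite (Nat.mul_comm k' p) in H3.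
      apply Nat.mul_divide_cancel_l in H3; [auto|lia].
  - exists 0%nat. split. simpl. apply Nat.divide_1_l.
    intros H3. apply H. apply Nat.mod_divide; [lia|]. simpl in H3. rewrite Nat.mul_1_r in H3. auto.
Qed.

Lemma divide_le' a b : (1 <= b)%nat -> Nat.divide a b -> (a <= b)%nat.
Proof. intros Hb Hd. apply Nat.divide_pos_le; auto; lia. Qed.

Lemma ell_step p k : prime_nat p -> (1 <= k)%nat -> ell (p * k) = (ell k + ln (INR p))%R.
Proof.
  intros Hp Hk. pose proof (prime_nat_ge2 _ Hp) as Hp2.
  destruct (val_exists p k Hp2 Hk) as [v [Hv1 Hv2]].
  set (d0 := (p ^ S v)%nat).
  assert (Hd0 : (d0 <= p * k)%nat).
  { unfold d0. simpl. apply Nat.mul_le_mono_l. apply divide_le'; auto. }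
  rewrite (ell_ext k (p * k)) by nia. unfold ell.
  rewrite <- (sum_delta d0 (p * k) (ln (INR p))) by auto.
  rewrite <- sum_n_Rplus.
  apply sum_n_ext. intros d.
  destruct (Nat.eq_dec d d0) as [E|E].
  - subst d. assert (dvb d0 (p * k) = true).
    { apply dvb_spec. unfold d0. apply Nat.pow_nonzero. lia.
      unfold d0. simpl. apply Nat.mul_divide_mono_l. auto. }
    assert (dvb d0 k = false).
    { destruct (dvb d0 k) eqn:E2; auto. apply dvb_spec in E2. tauto.
      unfold d0. apply Nat.pow_nonzero. lia. }
    rewrite H, H0. destruct (Nat.eq_dec d0 d0) as [_|X]; [|now elim X]. unfold d0. rewrite Lam_pp; [lra|auto|lia].
  - destruct (Nat.eq_dec d d0) as [X|_]; [congruence|].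
    destruct (Lam_cases d) as [H|[r [j [Hr [Hj [Ed H]]]]]].
    + rewrite H. destruct dvb, dvb; lra.
    + assert (Hd : d <> 0%nat) by (subst; apply Nat.pow_nonzero; apply prime_nat_ge2 in Hr; lia).
      assert (dvb d (p * k) = dvb d k); [|rewrite H0; lra].
      destruct (dvb d k) eqn:E1.
      * apply dvb_spec; auto. apply dvb_spec in E1; auto. apply Nat.divide_mul_r. auto.
      * destruct (dvb d (p*k)) eqn:E2; auto. exfalso.
        apply dvb_spec in E2; auto. assert (~ Nat.divide d k) by (intro X; apply dvb_spec in X; auto; congruence).
        destruct (Nat.eq_dec r p) as [Erp|Erp].
        -- subst r. destruct j as [|j]; [lia|].
           subst d. simpl in E2. apply Nat.mul_divide_cancel_l in E2; [|lia].
           destruct (le_lt_dec j v).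
           ++ apply H0. simpl. apply Nat.divide_trans with (p ^ v); auto.
              destruct (Nat.eq_dec j v). subst. exfalso. apply E. reflexivity.
              exists (p ^ (v - S j))%nat. rewrite <- Nat.pow_succ_r', <- Nat.pow_add_r. f_equal. lia.
           ++ apply Hv2. apply Nat.divide_trans with (p ^ j); auto.
              exists (p ^ (j - S v))%nat. rewrite <- Nat.pow_add_r. f_equal. lia.
        -- apply H0. apply nat_Z_divide. apply nat_Z_divide in E2.
           rewrite Nat2Z.inj_mul in E2. apply Gauss with (Z.of_nat p); auto.
           subst d. rewrite Nat2Z.inj_pow. apply rel_prime_sym.
           apply rel_prime_Zpower_r. lia.
           apply prime_rel_prime; auto. intros X. apply Erp.
           symmetry. apply prime_nat_div_prime; auto. apply nat_Z_divide. auto.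
Qed.

Lemma prime_divisor_exists n : (2 <= n)%nat -> exists p, prime_nat p /\ Nat.divide p n.
Proof.
  induction n as [n IH] using (well_founded_induction lt_wf). intros Hn.
  destruct (prime_dec (Z.of_nat n)) as [H|H].
  - exists n. split; auto. apply Nat.divide_refl.
  - destruct (not_prime_divide (Z.of_nat n)) as [m [Hm Hmd]]; [lia|auto|].
    destruct (IH (Z.to_nat m)) as [p [Hp Hpd]]; try lia.
    exists p. split; auto. apply Nat.divide_trans with (Z.to_nat m); auto.
    apply nat_Z_divide. rewrite Z2Nat.id by lia. auto.
Qed.

Theorem ell_ln n : (1 <= n)%nat -> ell n = ln (INR n).
Proof.
  induction n as [n IH] using (well_founded_induction lt_wf). intros Hn.
  destruct (Nat.eq_dec n 1) as [E|E].
  - subst. unfold ell. rewrite sum_Sn, sum_O. rewrite Lam_0, Lam_1.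
    replace (INR 1) with 1%R by reflexivity. rewrite ln_1. destruct (dvb 0 1), (dvb 1 1); unfold plus; simpl; lra.
  - destruct (prime_divisor_exists n) as [p [Hp [k Hk]]]; [lia|].
    pose proof (prime_nat_ge2 _ Hp).
    rewrite Hk, Nat.mul_comm, ell_step; auto; [|nia].
    rewrite IH; try nia. rewrite mult_INR, ln_mult. lra.
    apply lt_0_INR; nia. apply lt_0_INR; lia.
Qed.

End NT.
Import NT.

Lemma sum_n_ext_R (a b : nat -> R) N : (forall n, a n = b n) -> sum_n a N = sum_n b N.
Proof. apply sum_n_ext. Qed.
Lemma sum_n_ext_loc_R (a b : nat -> R) N : (forall n, (n <= N)%nat -> a n = b n) -> sum_n a N = sum_n b N.
Proof. apply sum_n_ext_loc. Qed.

Lemma sum_n_Rle (u v : nat -> R) N : (forall k, (k <= N)%nat -> u k <= v k) -> sum_n u N <= sum_n v N.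
Proof.
  intros H. induction N. rewrite !sum_O; auto.
  rewrite !sum_Sn. unfold plus; simpl. apply Rplus_le_compat; auto.
Qed.

Lemma sum_n_nonneg (u : nat -> R) N : (forall k, (k <= N)%nat -> 0 <= u k) -> 0 <= sum_n u N.
Proof.
  intros H. rewrite <- (sum_n_zero (fun _ => 0) N) by auto. apply sum_n_Rle. auto.
Qed.

Lemma sum_n_Rmult_l (a : R) (u : nat -> R) N : sum_n (fun k => a * u k) N = a * sum_n u N.
Proof. apply (sum_n_mult_l (K:=R_Ring)). Qed.

Lemma sum_n_Rmult_r (a : R) (u : nat -> R) N : sum_n (fun k => u k * a) N = sum_n u N * a.
Proof. apply (sum_n_mult_r (K:=R_Ring)). Qed.

Lemma sum_n_Ropp (u : nat -> R) N : sum_n (fun k => - u k) N = - sum_n u N.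
Proof.
  induction N. rewrite !sum_O; auto. rewrite !sum_Sn, IHN. unfold plus; simpl; lra.
Qed.

Lemma sum_n_Rminus (u v : nat -> R) N : sum_n (fun k => u k - v k) N = sum_n u N - sum_n v N.
Proof.
  unfold Rminus. rewrite sum_n_Rplus, sum_n_Ropp. auto.
Qed.

Lemma sum_n_Sn (u : nat -> R) N : sum_n u (S N) = sum_n u N + u (S N).
Proof. rewrite sum_Sn. reflexivity. Qed.

Lemma sum_n_0 (u : nat -> R) : sum_n u 0 = u 0%nat.
Proof. apply sum_O. Qed.

Lemma sum_n_extend (u : nat -> R) a N : (a <= N)%nat -> (forall k, (a < k)%nat -> (k <= N)%nat -> u k = 0) ->
  sum_n u a = sum_n u N.
Proof.
  intros H Hz. induction H; auto. rewrite sum_n_Sn, <- IHle, Hz; try lia. lra.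
  intros; apply Hz; lia.
Qed.

Lemma sum_n_term_le (u : nat -> R) i N : (i <= N)%nat -> (forall k, (k <= N)%nat -> 0 <= u k) -> u i <= sum_n u N.
Proof.
  intros Hi H. induction N.
  - assert (i = 0%nat) by lia. subst. rewrite sum_n_0. lra.
  - rewrite sum_n_Sn. destruct (Nat.eq_dec i (S N)).
    + subst. assert (0 <= sum_n u N) by (apply sum_n_nonneg; auto). lra.
    + assert (u i <= sum_n u N) by (apply IHN; auto; lia). assert (0 <= u (S N)) by (apply H; lia). lra.
Qed.

Lemma sum_n_mono (u : nat -> R) a b : (a <= b)%nat -> (forall k, 0 <= u k) -> sum_n u a <= sum_n u b.
Proof.
  intros H Hu. induction H. lra. rewrite sum_n_Sn. specialize (Hu (S m)). lra.
Qed.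

Lemma sum_n_Rabs (u : nat -> R) N : Rabs (sum_n u N) <= sum_n (fun k => Rabs (u k)) N.
Proof.
  induction N. rewrite !sum_n_0. lra. rewrite !sum_n_Sn.
  eapply Rle_trans. apply Rabs_triang. lra.
Qed.

Lemma sum_n_switch_R (u : nat -> nat -> R) m n :
  sum_n (fun i => sum_n (u i) n) m = sum_n (fun j => sum_n (fun i => u i j) m) n.
Proof. apply (sum_n_switch (G:=R_AbelianMonoid)). Qed.

Lemma div_succ_cases M d : (d <> 0)%nat ->
  (dvb d (S M) = true /\ S M / d = S (M / d) /\ S M = d * S (M / d))%nat
  \/ (dvb d (S M) = false /\ S M / d = M / d)%nat.
Proof.
  intros Hd. pose proof (Nat.div_mod_eq M d) as E. pose proof (Nat.mod_upper_bound M d Hd).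
  set (q := (M / d)%nat) in *. set (r := (M mod d)%nat) in *.
  destruct (Nat.eq_dec (S r) d) as [Hr|Hr].
  - left. assert (S M = d * S q)%nat by nia. split; [|split; auto].
    apply dvb_spec; auto. exists (S q). lia.
    symmetry. apply Nat.div_unique with 0%nat; lia.
  - right. split.
    + unfold dvb. apply Nat.eqb_neq. rewrite <- (Nat.mod_unique (S M) d q (S r)); lia.
    + symmetry. apply Nat.div_unique with (S r); lia.
Qed.

Lemma reindex_mult (g : nat -> R) d M : (d <> 0)%nat ->
  sum_n (fun n => if dvb d n then g n else 0) M = sum_n (fun k => g (d * k)%nat) (M / d).
Proof.
  intros Hd. induction M.
  - rewrite sum_n_0, Nat.div_0_l by auto. rewrite sum_n_0.
    replace (dvb d 0) with true. f_equal; lia.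
    symmetry. apply dvb_spec; auto. apply Nat.divide_0_r.
  - rewrite sum_n_Sn, IHM. destruct (div_succ_cases M d Hd) as [[H1 [H2 H3]]|[H1 H2]].
    + rewrite H1, H2, sum_n_Sn. rewrite <- H3. auto.
    + rewrite H1, H2. lra.
Qed.

Theorem sumdiv (g : nat -> R) M : g 0%nat = 0 ->
  sum_n (fun n => g n * ln (INR n)) M =
  sum_n (fun d => vonMangoldt d * sum_n (fun k => g (d * k)%nat) (M / d)) M.
Proof.
  intros Hg0.
  transitivity (sum_n (fun n => sum_n (fun d => g n * (if dvb d n then vonMangoldt d else 0)) M) M).
  - apply sum_n_ext_loc. intros n Hn. destruct (Nat.eq_dec n 0).
    + subst. rewrite Hg0. rewrite sum_n_zero. lra. intros; lra.
    + rewrite sum_n_Rmult_l. f_equal. rewrite <- ell_ln by lia. apply ell_ext; lia.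
  - rewrite sum_n_switch_R. apply sum_n_ext_loc. intros d Hd.
    destruct (Nat.eq_dec d 0).
    + subst. rewrite Lam_0. rewrite sum_n_zero. lra.
      intros. destruct dvb; lra.
    + rewrite <- reindex_mult by auto. rewrite <- sum_n_Rmult_l. apply sum_n_ext. intros n0.
      destruct dvb; lra.
Qed.

Definition Lf (N : nat) : R := sum_n (fun n => ln (INR n)) N.
Definition psi (N : nat) : R := sum_n vonMangoldt N.

Lemma ln_0 : ln 0 = 0.
Proof. unfold ln. case Rlt_dec. intros H; exfalso; apply (Rlt_irrefl 0 H). reflexivity. Qed.

Lemma legendre M : Lf M = sum_n (fun d => vonMangoldt d * INR (M / d)) M.
Proof.
  unfold Lf. pose (g := fun n : nat => if Nat.eq_dec n 0 then 0 else 1).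
  transitivity (sum_n (fun n => g n * ln (INR n)) M).
  { apply sum_n_ext. intros n. unfold g. destruct Nat.eq_dec. subst. simpl. rewrite ln_0. lra. lra. }
  rewrite sumdiv by (unfold g; destruct Nat.eq_dec; lia || auto).
  apply sum_n_ext_loc. intros d Hd. destruct (Nat.eq_dec d 0).
  { subst. rewrite Lam_0. lra. }
  f_equal. generalize (M / d)%nat. intros K. induction K.
  - rewrite sum_n_0. unfold g. rewrite Nat.mul_0_r. destruct Nat.eq_dec; [simpl; lra|lia].
  - rewrite sum_n_Sn, IHK. unfold g. destruct Nat.eq_dec; [lia|]. rewrite S_INR. lra.
Qed.

Lemma Lf_fact N : Lf N = ln (INR (fact N)).
Proof.
  unfold Lf. induction N.
  - rewrite sum_n_0. simpl. rewrite ln_0, ln_1. auto.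
  - rewrite sum_n_Sn, IHN. rewrite fact_simpl, mult_INR, ln_mult. lra.
    apply lt_0_INR; lia. apply lt_0_INR, lt_O_fact.
Qed.

Lemma binom_le N a : (a <= N)%nat -> INR (fact N) / (INR (fact a) * INR (fact (N - a))) <= 2 ^ N.
Proof.
  intros Ha. replace 2 with (1 + 1) by lra. rewrite binomial. rewrite <- sum_n_Reals.
  change (INR (fact N) / (INR (fact a) * INR (fact (N - a)))) with (Binomial.C N a).
  replace (Binomial.C N a) with (Binomial.C N a * 1 ^ a * 1 ^ (N - a)) by (rewrite !pow1; lra).
  apply sum_n_term_le with (u := fun i => Binomial.C N i * 1 ^ i * 1 ^ (N - i)); auto.
  intros k Hk. rewrite !pow1. unfold Binomial.C. apply Rmult_le_pos. rewrite Rmult_1_r. 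
  unfold Rdiv. apply Rmult_le_pos. apply pos_INR. left. apply Rinv_0_lt_compat.
  apply Rmult_lt_0_compat; apply lt_0_INR, lt_O_fact. lra.
Qed.

Lemma Lf_binom N a : (a <= N)%nat -> Lf N - Lf a - Lf (N - a) <= INR N * ln 2.
Proof.
  intros Ha. rewrite !Lf_fact.
  assert (0 < INR (fact a)) by apply lt_0_INR, lt_O_fact.
  assert (0 < INR (fact (N - a))) by apply lt_0_INR, lt_O_fact.
  assert (0 < INR (fact N)) by apply lt_0_INR, lt_O_fact.
  replace (ln (INR (fact N)) - ln (INR (fact a)) - ln (INR (fact (N - a))))
    with (ln (INR (fact N) / (INR (fact a) * INR (fact (N - a))))).
  2:{ unfold Rdiv. rewrite ln_mult, ln_Rinv, ln_mult; try lra; try nra. apply Rinv_0_lt_compat; nra. }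
  rewrite <- ln_pow by lra. apply ln_le.
  unfold Rdiv. apply Rmult_lt_0_compat; auto. apply Rinv_0_lt_compat; nra.
  apply binom_le; auto.
Qed.

Lemma ln2_pos : 0 < ln 2.
Proof. rewrite <- ln_1. apply ln_increasing; lra. Qed.

Lemma psi_diff N a : (a <= N - a)%nat ->
  psi N - psi (N - a) <= Lf N - Lf a - Lf (N - a).
Proof.
  intros H1. set (b := (N - a)%nat) in *.
  assert (Hb : (b <= N)%nat) by lia.
  assert (Ea : (a + b = N)%nat) by lia.
  rewrite !legendre. unfold psi.
  rewrite (sum_n_extend (fun d => vonMangoldt d * INR (a / d)) a N) by (try lia; intros k Hk _; rewrite Nat.div_small by lia; simpl; lra).
  rewrite (sum_n_extend (fun d => vonMangoldt d * INR (b / d)) b N) by (try lia; intros k Hk _; rewrite Nat.div_small by lia; simpl; lra).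
  replace (sum_n vonMangoldt b) with (sum_n (fun d => if le_dec d b then vonMangoldt d else 0) N).
  2:{ rewrite <- (sum_n_extend _ b N); auto. apply sum_n_ext_loc. intros k Hk. destruct le_dec; lia || auto.
      intros k Hk _. destruct le_dec; lia || auto. }
  rewrite <- !sum_n_Rminus. apply sum_n_Rle. intros d Hd.
  destruct (Nat.eq_dec d 0). { subst d. rewrite Lam_0. destruct le_dec; lra. }
  pose proof (Lam_ge0 d).
  assert (Hc : (a / d + b / d + (if le_dec d b then 0 else 1) <= N / d)%nat).
  { destruct le_dec.
    - rewrite Nat.add_0_r. apply Nat.div_le_lower_bound; auto.
      pose proof (Nat.mul_div_le a d n). pose proof (Nat.mul_div_le b d n). nia.
    - rewrite (Nat.div_small a d), (Nat.div_small b d) by lia. simpl.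
      apply Nat.div_le_lower_bound; lia. }
  apply le_INR in Hc. rewrite !plus_INR in Hc.
  destruct le_dec; simpl in Hc; nra.
Qed.

Lemma ln_le_sub1 x : 0 < x -> ln x <= x - 1.
Proof. intros H. pose proof (exp_ineq1_le (ln x)). rewrite exp_ln in H0; lra. Qed.

Lemma psi_small N : (N <= 1)%nat -> psi N = 0.
Proof.
  intros H. unfold psi. destruct N. rewrite sum_n_0, Lam_0; auto.
  destruct N; [|lia]. rewrite sum_n_Sn, sum_n_0, Lam_0, Lam_1. lra.
Qed.

Lemma psi_nonneg N : 0 <= psi N.
Proof. apply sum_n_nonneg. intros; apply Lam_ge0. Qed.

Theorem chebyshev N : psi N <= 4 * ln 2 * INR N.
Proof.
  pose proof ln2_pos as L2.
  induction N as [N IH] using (well_founded_induction lt_wf).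
  destruct (le_lt_dec N 1) as [H|H].
  - rewrite psi_small by auto. pose proof (pos_INR N). nra.
  - set (a := (N / 2)%nat). set (b := (N - a)%nat).
    assert (Ha : (1 <= a)%nat) by (apply Nat.div_le_lower_bound; lia).
    assert (Hab : (a <= b)%nat).
    { unfold b, a. pose proof (Nat.mul_div_le N 2). lia. }
    assert (Hb2 : (2 * b <= N + 1)%nat).
    { unfold b, a. pose proof (Nat.div_mod_eq N 2). pose proof (Nat.mod_upper_bound N 2). lia. }
    pose proof (psi_diff N a Hab) as D. fold b in D.
    pose proof (Lf_binom N a ltac:(lia)) as B. fold b in B.
    assert (IHb := IH b ltac:(lia)).
    apply le_INR in Hb2. rewrite mult_INR, plus_INR in Hb2. simpl in Hb2.
    assert (H2 : 2 <= INR N) by (replace 2 with (INR 2) by (simpl; lra); apply le_INR; lia).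
    assert (ln 2 * (2 * INR b) <= ln 2 * (INR N + 1)) by (apply Rmult_le_compat_l; lra).
    assert (ln 2 * 2 <= ln 2 * INR N) by (apply Rmult_le_compat_l; lra).
    lra.
Qed.

Lemma Lf_upper n : Lf n <= INR n * ln (INR n).
Proof.
  induction n.
  - unfold Lf. rewrite sum_n_0. simpl. rewrite ln_0. lra.
  - unfold Lf in *. rewrite sum_n_Sn.
    destruct (Nat.eq_dec n 0).
    + subst. rewrite sum_n_0. simpl. rewrite ln_0, ln_1. lra.
    + assert (ln (INR n) <= ln (INR (S n))).
      { apply ln_le. apply lt_0_INR; lia. apply le_INR; lia. }
      rewrite S_INR. assert (0 <= ln (INR n)).
      { rewrite <- ln_1. apply ln_le. lra. replace 1 with (INR 1) by auto. apply le_INR; lia. }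
      rewrite S_INR in H. pose proof (pos_INR n). nra.
Qed.

Lemma Lf_lower n : (1 <= n)%nat -> INR n * ln (INR n) - INR n <= Lf n.
Proof.
  intros Hn. induction Hn.
  - unfold Lf. rewrite sum_n_Sn, sum_n_0. simpl. rewrite ln_0, ln_1. unfold plus; simpl. lra.
  - unfold Lf in *. rewrite sum_n_Sn.
    assert (Hm : 0 < INR m) by (apply lt_0_INR; lia).
    assert (ln (INR (S m)) - ln (INR m) <= 1 / INR m).
    { rewrite <- ln_div by (try lra; apply lt_0_INR; lia).
      eapply Rle_trans. apply ln_le_sub1. apply Rdiv_lt_0_compat; try lra. apply lt_0_INR; lia.
      rewrite S_INR. apply Req_le. field. lra. }
    rewrite S_INR in *.
    assert (INR m * (ln (INR m + 1) - ln (INR m)) <= 1).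
    { apply Rmult_le_compat_l with (r := INR m) in H; [|lra].
      replace (INR m * (1 / INR m)) with 1 in H by (field; lra). lra. }
    nra.
Qed.

Definition T (n : nat) : R := sum_n (fun q => vonMangoldt q / INR q) n.

Lemma nT_identity n : INR n * T n = sum_n (fun d => vonMangoldt d * (INR n / INR d)) n.
Proof.
  unfold T. rewrite <- sum_n_Rmult_l. apply sum_n_ext_R. intros d.
  destruct (Nat.eq_dec d 0). subst. rewrite Lam_0. unfold Rdiv. lra.
  field. apply not_0_INR; auto.
Qed.

Lemma T_lower n : (1 <= n)%nat -> ln (INR n) - 1 <= T n.
Proof.
  intros Hn. assert (Hp : 0 < INR n) by (apply lt_0_INR; lia).
  assert (Lf n <= INR n * T n).
  { rewrite nT_identity, legendre. apply sum_n_Rle. intros d Hd.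
    destruct (Nat.eq_dec d 0). subst. rewrite Lam_0. lra.
    apply Rmult_le_compat_l. apply Lam_ge0.
    assert (0 < INR d) by (apply lt_0_INR; lia).
    apply Rmult_le_reg_r with (INR d); auto. unfold Rdiv. rewrite Rmult_assoc, Rinv_l by lra.
    rewrite Rmult_1_r, <- mult_INR. apply le_INR. rewrite Nat.mul_comm. apply Nat.mul_div_le. auto. }
  pose proof (Lf_lower n Hn).
  apply Rmult_le_reg_l with (INR n); auto. nra.
Qed.

Lemma T_upper n : (1 <= n)%nat -> T n <= ln (INR n) + 4 * ln 2.
Proof.
  intros Hn. assert (Hp : 0 < INR n) by (apply lt_0_INR; lia).
  assert (INR n * T n <= Lf n + psi n).
  { rewrite nT_identity, legendre. unfold psi. rewrite <- sum_n_Rplus. apply sum_n_Rle. intros d Hd.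
    destruct (Nat.eq_dec d 0). subst. rewrite Lam_0. lra.
    rewrite <- (Rmult_1_r (vonMangoldt d)) at 3. rewrite <- Rmult_plus_distr_l.
    apply Rmult_le_compat_l. apply Lam_ge0.
    assert (0 < INR d) by (apply lt_0_INR; lia).
    apply Rmult_le_reg_r with (INR d); auto. unfold Rdiv. rewrite Rmult_assoc, Rinv_l by lra.
    rewrite Rmult_1_r. replace ((INR (n / d) + 1) * INR d) with (INR (d * S (n / d))).
    apply le_INR. pose proof (Nat.div_mod_eq n d). pose proof (Nat.mod_upper_bound n d n0). lia.
    rewrite mult_INR, S_INR. ring. }
  pose proof (Lf_upper n). pose proof (chebyshev n).
  apply Rmult_le_reg_l with (INR n); auto. nra.
Qed.

Lemma ln2_lt_1 : ln 2 < 1.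
Proof.
  rewrite <- ln_exp with 1. apply ln_increasing. lra.
  pose proof (exp_ineq1 1 ltac:(lra)). lra.
Qed.

Definition cq (q : nat) : R := ln (INR (S q)) - ln (INR q).

Lemma cq_sum n : sum_n cq n = ln (INR (S n)).
Proof.
  induction n. rewrite sum_n_0. unfold cq. simpl. rewrite ln_0. lra.
  rewrite sum_n_Sn, IHn. unfold cq. lra.
Qed.

Lemma cq_bounds q : (1 <= q)%nat -> 0 <= cq q <= 1.
Proof.
  intros H. unfold cq. assert (0 < INR q) by (apply lt_0_INR; lia).
  rewrite S_INR. split.
  - assert (ln (INR q) <= ln (INR q + 1)) by (apply ln_le; lra). lra.
  - rewrite <- ln_div by lra. eapply Rle_trans. apply ln_le_sub1. apply Rdiv_lt_0_compat; lra.
    assert (1 <= INR q) by (replace 1 with (INR 1) by auto; apply le_INR; lia).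
    apply Rle_trans with (1 / INR q). right. field. lra.
    unfold Rdiv. rewrite Rmult_1_l. rewrite <- Rinv_1. apply Rinv_le_contravar; lra.
Qed.

Definition bq (q : nat) : R := vonMangoldt q / INR q - cq q.

Lemma bq_sum_bound n : Rabs (sum_n bq n) <= 4.
Proof.
  unfold bq. rewrite sum_n_Rminus. fold (T n). rewrite cq_sum.
  pose proof ln2_lt_1. pose proof ln2_pos.
  destruct (Nat.eq_dec n 0).
  - subst. unfold T. rewrite sum_n_0, Lam_0. simpl. rewrite ln_1. unfold Rdiv. rewrite Rmult_0_l, Rminus_0_r, Rabs_R0. lra.
  - pose proof (T_lower n ltac:(lia)). pose proof (T_upper n ltac:(lia)).
    pose proof (cq_bounds n ltac:(lia)). unfold cq in H3.
    apply Rabs_le. lra.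
Qed.

Lemma range_ext (u v : nat -> R) A' B : (A' <= B)%nat ->
  (forall q, (A' < q)%nat -> (q <= B)%nat -> u q = v q) ->
  sum_n u B - sum_n u A' = sum_n v B - sum_n v A'.
Proof.
  intros H. induction H; intros Hq. lra.
  rewrite !sum_n_Sn. rewrite Hq by lia. assert (E := IHle ltac:(intros; apply Hq; lia)). lra.
Qed.

Lemma abel (b f : nat -> R) (M : R) A' B : (A' <= B)%nat ->
  (forall n, Rabs (sum_n b n) <= M) ->
  (forall q, 0 <= f q) ->
  (forall q, (S A' <= q)%nat -> (q < B)%nat -> f (S q) <= f q) ->
  Rabs (sum_n (fun q => b q * f q) B - sum_n (fun q => b q * f q) A') <= 2 * M * f (S A').
Proof.
  intros HB HM Hf0 Hfd. destruct (Nat.eq_dec A' B).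
  { subst. rewrite Rminus_diag, Rabs_R0. destruct (Nat.eq_dec B B) as [_|]; [|lia].
    assert (0 <= M) by (eapply Rle_trans; [apply Rabs_pos|apply (HM 0%nat)]).
    specialize (Hf0 (S B)). nra. }
  assert (Inv : forall B', (S A' <= B')%nat -> (B' <= B)%nat ->
    Rabs (sum_n (fun q => b q * f q) B' - sum_n (fun q => b q * f q) A' - sum_n b B' * f B')
      <= M * f (S A') + M * (f (S A') - f B')).
  { intros B' H1 H2. induction H1.
    - rewrite sum_n_Sn, (sum_n_Sn b). 
      replace (sum_n (fun q => b q * f q) A' + b (S A') * f (S A') - sum_n (fun q => b q * f q) A' -
        (sum_n b A' + b (S A')) * f (S A')) with (- (sum_n b A' * f (S A'))) by ring.
      rewrite Rabs_Ropp, Rabs_mult, (Rabs_right (f (S A'))) by (apply Rle_ge, Hf0).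
      specialize (HM A'). assert (0 <= f (S A')) by apply Hf0. nra.
    - assert (IH := IHle ltac:(lia)).
      rewrite sum_n_Sn, (sum_n_Sn b).
      replace (sum_n (fun q => b q * f q) m + b (S m) * f (S m) - sum_n (fun q => b q * f q) A' -
        (sum_n b m + b (S m)) * f (S m)) with
        ((sum_n (fun q => b q * f q) m - sum_n (fun q => b q * f q) A' - sum_n b m * f m)
          + sum_n b m * (f m - f (S m))) by ring.
      eapply Rle_trans. apply Rabs_triang. rewrite Rabs_mult.
      assert (f (S m) <= f m) by (apply Hfd; lia).
      rewrite (Rabs_right (f m - f (S m))) by lra.
      specialize (HM m). assert (0 <= M) by (eapply Rle_trans; [apply Rabs_pos|apply HM]). nra. }
  specialize (Inv B ltac:(lia) ltac:(lia)).
  assert (0 <= f B) by apply Hf0.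
  specialize (HM B). assert (0 <= M) by (eapply Rle_trans; [apply Rabs_pos|apply HM]).
  assert (Rabs (sum_n b B * f B) <= M * f B) by (rewrite Rabs_mult, (Rabs_right (f B)) by lra; nra).
  pose proof (Rabs_triang (sum_n (fun q => b q * f q) B - sum_n (fun q => b q * f q) A' - sum_n b B * f B) (sum_n b B * f B)).
  replace (sum_n (fun q => b q * f q) B - sum_n (fun q => b q * f q) A' - sum_n b B * f B + sum_n b B * f B)
    with (sum_n (fun q => b q * f q) B - sum_n (fun q => b q * f q) A') in H2 by ring.
  lra.
Qed.

Lemma Rinv_nonneg x : 0 <= x -> 0 <= / x.
Proof. intros [H|H]. left; apply Rinv_0_lt_compat; auto. subst. rewrite Rinv_0. lra. Qed.

Definition fm (m : nat) (t : R) : R := 1 / (ln (INR m * t)) ^ 2.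
Definition gm (m : nat) (t : R) : R := 1 / ln (INR m * t).

Lemma step_ineq l1 c : 0 < l1 -> 0 <= c <= 1 ->
  0 <= c / l1 ^ 2 - (1 / l1 - 1 / (l1 + c)) <= 1 / l1 ^ 2 - 1 / (l1 + c) ^ 2.
Proof.
  intros H1 Hc.
  replace (c / l1 ^ 2 - (1 / l1 - 1 / (l1 + c))) with (c * c / (l1 ^ 2 * (l1 + c))) by (field; lra).
  assert (E2 : 1 / l1 ^ 2 - 1 / (l1 + c) ^ 2 - c * c / (l1 ^ 2 * (l1 + c))
    = c * (l1 + (l1 + c) - c * (l1 + c)) / (l1 ^ 2 * (l1 + c) ^ 2)) by (field; lra).
  split.
  - apply Rmult_le_pos. nra. left. apply Rinv_0_lt_compat. apply Rmult_lt_0_compat; nra.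
  - cut (0 <= c * (l1 + (l1 + c) - c * (l1 + c)) / (l1 ^ 2 * (l1 + c) ^ 2)). lra.
    assert (c * (l1 + c) <= 1 * (l1 + c)) by (apply Rmult_le_compat_r; lra).
    apply Rmult_le_pos. apply Rmult_le_pos; lra. left. apply Rinv_0_lt_compat. apply Rmult_lt_0_compat; nra.
Qed.

Lemma ln_m_pos m t : (1 <= m)%nat -> 2 <= t -> 0 < ln (INR m * t).
Proof.
  intros Hm Ht. rewrite <- ln_1. apply ln_increasing. lra.
  assert (1 <= INR m) by (replace 1 with (INR 1) by auto; apply le_INR; lia). nra.
Qed.

Lemma ln_m_le m s t : (1 <= m)%nat -> 0 < s -> s <= t -> ln (INR m * s) <= ln (INR m * t).
Proof.
  intros Hm Hs Ht. assert (1 <= INR m) by (replace 1 with (INR 1) by auto; apply le_INR; lia).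
  apply ln_le; nra.
Qed.

Lemma fm_nonneg m t : 0 <= fm m t.
Proof.
  unfold fm, Rdiv. apply Rmult_le_pos. lra. apply Rinv_nonneg. apply pow2_ge_0.
Qed.

Lemma fm_decr m s t : (1 <= m)%nat -> 2 <= s -> s <= t -> fm m t <= fm m s.
Proof.
  intros Hm Hs Ht. unfold fm. pose proof (ln_m_pos m s Hm Hs). pose proof (ln_m_le m s t Hm ltac:(lra) Ht).
  unfold Rdiv. rewrite !Rmult_1_l. apply Rinv_le_contravar. nra. nra.
Qed.

Lemma cq_ln m q : (1 <= m)%nat -> (1 <= q)%nat ->
  ln (INR m * INR (S q)) = ln (INR m * INR q) + cq q.
Proof.
  intros Hm Hq. unfold cq.
  assert (0 < INR m) by (apply lt_0_INR; lia). assert (0 < INR q) by (apply lt_0_INR; lia).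
  rewrite !ln_mult; try lra. apply lt_0_INR; lia.
Qed.

Lemma glemma m A' B : (1 <= m)%nat -> (1 <= A')%nat -> (A' <= B)%nat ->
  0 <= (sum_n (fun q => cq q * fm m (INR q)) B - sum_n (fun q => cq q * fm m (INR q)) A')
       - (gm m (INR (S A')) - gm m (INR (S B)))
  <= fm m (INR (S A')) - fm m (INR (S B)).
Proof.
  intros Hm HA HB. induction HB. { rewrite !Rminus_diag. lra. }
  rewrite sum_n_Sn.
  assert (Hq : 2 <= INR (S m0)) by (replace 2 with (INR 2) by (simpl; lra); apply le_INR; lia).
  pose proof (ln_m_pos m _ Hm Hq) as Hl.
  pose proof (cq_bounds (S m0) ltac:(lia)) as Hc.
  pose proof (step_ineq _ _ Hl Hc) as St.
  rewrite <- cq_ln in St by lia.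
  unfold fm, gm in *. unfold Rdiv in *. lra.
Qed.

Lemma bdry m a b : (1 <= m)%nat -> 2 <= a -> a <= b -> b <= a + 1 -> 0 <= gm m a - gm m b <= fm m a.
Proof.
  intros Hm Ha Hab Hb. unfold gm, fm.
  assert (0 < INR m) by (apply lt_0_INR; lia).
  pose proof (ln_m_pos m a Hm Ha) as La. pose proof (ln_m_le m a b Hm ltac:(lra) Hab) as Lb.
  assert (E : ln (INR m * b) - ln (INR m * a) = ln (b / a)).
  { rewrite ln_div by lra. rewrite !ln_mult by lra. ring. }
  assert (Hl : ln (b / a) <= 1).
  { eapply Rle_trans. apply ln_le_sub1. apply Rdiv_lt_0_compat; lra.
    apply Rle_trans with (b / a - a / a). right. field. lra.
    replace (b / a - a / a) with ((b - a) / a) by (field; lra).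
    apply Rle_trans with ((b - a) / 1). unfold Rdiv. apply Rmult_le_compat_l. lra.
    rewrite <- Rinv_1. apply Rinv_le_contravar; lra. lra. }
  assert (0 <= ln (b / a)) by lra.
  replace (1 / ln (INR m * a) - 1 / ln (INR m * b)) with (ln (b / a) / (ln (INR m * a) * ln (INR m * b)))
    by (rewrite <- E; field; lra).
  split. apply Rdiv_le_0_compat; nra.
  unfold Rdiv. apply Rle_trans with (1 * / (ln (INR m * a) * ln (INR m * b))).
  apply Rmult_le_compat_r; [left; apply Rinv_0_lt_compat; nra|lra].
  rewrite !Rmult_1_l. apply Rinv_le_contravar. nra. simpl. nra.
Qed.

Lemma term_split m q : (1 <= m)%nat -> (2 <= q)%nat ->
  term m q = bq q * fm m (INR q) + cq q * fm m (INR q).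
Proof.
  intros Hm Hq. unfold term, bq, fm.
  assert (Hq2 : 2 <= INR q) by (replace 2 with (INR 2) by (simpl; lra); apply le_INR; lia).
  pose proof (ln_m_pos m _ Hm Hq2). field. split; lra.
Qed.

Theorem core_i m A' B y z : (1 <= m)%nat -> (1 <= A')%nat -> (A' <= B)%nat ->
  INR A' < y -> y <= INR (S A') -> INR B <= z -> z < INR B + 1 -> 2 <= y -> y <= z ->
  Rabs (sum_n (term m) B - sum_n (term m) A' - (gm m y - gm m z)) <= 11 * fm m y.
Proof.
  intros Hm HA HB Hy1 Hy2 Hz1 Hz2 Hy Hyz.
  assert (HA2 : 2 <= INR (S A')) by lra.
  rewrite (range_ext (term m) (fun q => bq q * fm m (INR q) + cq q * fm m (INR q)) A' B HB).
  2:{ intros q H1 H2. apply term_split; auto. lia. }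
  rewrite !sum_n_Rplus.
  assert (Ab : Rabs (sum_n (fun q => bq q * fm m (INR q)) B - sum_n (fun q => bq q * fm m (INR q)) A')
     <= 2 * 4 * fm m (INR (S A'))).
  { apply abel; auto. apply bq_sum_bound. intros; apply fm_nonneg.
    intros q H1 H2. apply fm_decr; auto. replace 2 with (INR 2) by (simpl; lra). apply le_INR; lia.
    apply le_INR; lia. }
  pose proof (glemma m A' B Hm HA HB) as G.
  assert (INR (S B) = INR B + 1) by (rewrite S_INR; auto).
  pose proof (bdry m y (INR (S A')) Hm Hy Hy2 ltac:(rewrite S_INR in *; lra)) as B1.
  pose proof (bdry m z (INR (S B)) Hm ltac:(lra) ltac:(lra) ltac:(lra)) as B2.
  pose proof (fm_decr m y (INR (S A')) Hm Hy Hy2).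
  pose proof (fm_decr m y z Hm Hy Hyz).
  pose proof (fm_nonneg m (INR (S B))).
  apply Rabs_le. apply Rabs_le_between in Ab. lra.
Qed.

Lemma series_bounds (a : nat -> R) (lo hi : R) :
  (forall n, 0 <= a n) -> (forall n, sum_n a n <= hi) ->
  (forall eps, 0 < eps -> exists n, lo - eps <= sum_n a n) ->
  ex_series a /\ lo <= Series a <= hi.
Proof.
  intros Ha Hhi Hlo.
  assert (Hinc : forall n, sum_n a n <= sum_n a (S n)).
  { intros n. rewrite sum_n_Sn. specialize (Ha (S n)). lra. }
  destruct (ex_finite_lim_seq_incr (sum_n a) hi Hinc Hhi) as [l Hl].
  assert (Hs : is_series a l) by exact Hl.
  assert (Series a = l) by (apply is_series_unique; auto).
  split. exists l; auto. rewrite H. split.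
  - apply Rnot_lt_le. intros Hc. destruct (Hlo ((lo - l) / 2) ltac:(lra)) as [n Hn].
    pose proof (is_lim_seq_incr_compare _ _ Hl Hinc n). lra.
  - assert (Hc : is_lim_seq (fun _ => hi) hi) by apply is_lim_seq_const.
    pose proof (is_lim_seq_le _ _ _ _ Hhi Hl Hc). simpl in H0. auto.
Qed.

Lemma floor_exists z : 0 <= z -> exists B : nat, INR B <= z < INR B + 1.
Proof.
  intros Hz. destruct (archimed z) as [H1 H2].
  assert (Hu : (1 <= up z)%Z).
  { assert (0 < IZR (up z)) by lra. apply lt_IZR in H. lia. }
  exists (Z.to_nat (up z - 1)). rewrite INR_IZR_INZ, Z2Nat.id by lia.
  rewrite minus_IZR. lra.
Qed.

Lemma ceil_exists y : 2 <= y -> exists A' : nat, (1 <= A')%nat /\ INR A' < y <= INR (S A').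
Proof.
  intros Hy. destruct (floor_exists y ltac:(lra)) as [B [H1 H2]].
  destruct (Req_dec (INR B) y) as [E|E].
  - exists (B - 1)%nat. assert (2 <= B)%nat.
    { apply INR_le. simpl. lra. }
    replace (S (B - 1)) with B by lia. rewrite minus_INR by lia. simpl. split; [lia|lra].
  - exists B. rewrite S_INR. assert (1 <= B)%nat.
    { destruct B. simpl in *. lra. lia. }
    split; auto; lra.
Qed.

Lemma sum_between_eq f y z A' B : (A' <= B)%nat -> INR A' < y -> y <= INR (S A') ->
  INR B <= z -> z < INR B + 1 ->
  sum_between f y z = sum_n f B - sum_n f A'.
Proof.
  intros HAB Hy1 Hy2 Hz1 Hz2. unfold sum_between.
  set (ind := fun q : nat => if Rle_dec y (INR q) then if Rle_dec (INR q) z then f q else 0 else 0).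
  destruct (archimed z) as [H1 H2].
  assert (HN : (B <= Z.to_nat (up z))%nat).
  { apply INR_le. rewrite (INR_IZR_INZ (Z.to_nat (up z))), Z2Nat.id. lra. 
    assert (0 < IZR (up z)) by (pose proof (pos_INR B); lra). apply lt_IZR in H. lia. }
  rewrite <- (sum_n_extend ind B) by (auto; intros k Hk _; unfold ind;
    destruct Rle_dec; auto; destruct Rle_dec; auto; exfalso;
    assert (INR (S B) <= INR k) by (apply le_INR; lia); rewrite S_INR in H; lra).
  rewrite <- (Rminus_0_r (sum_n ind B)).
  replace 0 with (sum_n ind A').
  2:{ apply sum_n_zero. intros k Hk. unfold ind. destruct Rle_dec; auto.
      apply le_INR in Hk. lra. }
  apply range_ext; auto. intros q Hq1 Hq2. unfold ind.
  apply le_INR in Hq1. apply le_INR in Hq2.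
  destruct Rle_dec; [|lra]. destruct Rle_dec; [auto|lra].
Qed.

Lemma term_nonneg m q : 0 <= term m q.
Proof.
  unfold term, Rdiv. apply Rmult_le_pos. apply Lam_ge0. apply Rinv_nonneg.
  apply Rmult_le_pos. apply pos_INR. apply pow2_ge_0.
Qed.

Theorem part_i_a m y z : (1 <= m)%nat -> 2 <= y -> y <= z ->
  Rabs (sum_between (term m) y z - (1 / ln (INR m * y) - 1 / ln (INR m * z)))
  <= 11 / (ln (INR m * y)) ^ 2.
Proof.
  intros Hm Hy Hyz.
  destruct (ceil_exists y Hy) as [A' [HA [Hy1 Hy2]]].
  destruct (floor_exists z ltac:(lra)) as [B [Hz1 Hz2]].
  assert (HAB : (A' <= B)%nat) by (apply INR_lt in Hy1 || idtac;
    assert (INR A' < INR B + 1) by lra; rewrite <- S_INR in H; apply INR_lt in H; lia).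
  rewrite (sum_between_eq _ y z A' B) by auto.
  pose proof (core_i m A' B y z Hm HA HAB Hy1 Hy2 Hz1 Hz2 Hy Hyz).
  unfold gm, fm in H. unfold Rdiv in *. lra.
Qed.

Lemma from_y_eq f y A' N : (A' <= N)%nat -> INR A' < y -> y <= INR (S A') ->
  sum_n (from_y f y) N = sum_n f N - sum_n f A'.
Proof.
  intros HN Hy1 Hy2.
  rewrite <- (Rminus_0_r (sum_n (from_y f y) N)).
  replace 0 with (sum_n (from_y f y) A').
  2:{ apply sum_n_zero. intros k Hk. unfold from_y. destruct Rle_dec; auto.
      apply le_INR in Hk. lra. }
  apply range_ext; auto. intros q Hq1 Hq2. unfold from_y.
  apply le_INR in Hq1. destruct Rle_dec; [auto|lra].
Qed.

Lemma gm_small m eps : (1 <= m)%nat -> 0 < eps -> exists N0 : nat, forall N, (N0 <= N)%nat -> gm m (INR N) <= eps.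
Proof.
  intros Hm He. destruct (floor_exists (exp (1 / eps) + 2)) as [K [_ HK]].
  pose proof (exp_pos (1/eps)). lra.
  exists K. intros N HN. unfold gm.
  assert (HN2 : exp (1 / eps) + 2 < INR N + 1) by (apply le_INR in HN; lra).
  assert (1 / eps <= ln (INR m * INR N)).
  { rewrite <- (ln_exp (1 / eps)). apply ln_le. apply exp_pos.
    assert (1 <= INR m) by (replace 1 with (INR 1) by auto; apply le_INR; lia).
    pose proof (exp_pos (1/eps)). nra. }
  assert (0 < 1 / eps) by (apply Rdiv_lt_0_compat; lra).
  unfold Rdiv in *. rewrite Rmult_1_l in *. replace eps with (/ / eps) by (field; lra).
  apply Rinv_le_contravar; lra.
Qed.

Theorem part_i_b m y : (1 <= m)%nat -> 2 <= y ->
  ex_series (from_y (term m) y) /\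
  Rabs (Series (from_y (term m) y) - 1 / ln (INR m * y)) <= 11 / (ln (INR m * y)) ^ 2.
Proof.
  intros Hm Hy.
  destruct (ceil_exists y Hy) as [A' [HA [Hy1 Hy2]]].
  assert (PS : forall N, (S A' <= N)%nat ->
    Rabs (sum_n (from_y (term m) y) N - (gm m y - gm m (INR N))) <= 11 * fm m y).
  { intros N HN. rewrite (from_y_eq _ y A' N) by (auto; lia).
    assert (INR (S A') <= INR N) by (apply le_INR; auto).
    apply core_i; auto; lia || lra. }
  assert (Hnn : forall n, 0 <= from_y (term m) y n).
  { intros n. unfold from_y. destruct Rle_dec. apply term_nonneg. lra. }
  assert (Hgm : forall N, (S A' <= N)%nat -> 0 <= gm m (INR N)).
  { intros N HN. unfold gm. assert (2 <= INR N).
    { apply le_INR in HN. rewrite S_INR in HN. assert (1 <= INR A') by (replace 1 with (INR 1) by auto; apply le_INR; lia). lra. }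
    pose proof (ln_m_pos m _ Hm H). unfold Rdiv. rewrite Rmult_1_l. left. apply Rinv_0_lt_compat. auto. }
  destruct (series_bounds (from_y (term m) y) (gm m y - 11 * fm m y) (gm m y + 11 * fm m y) Hnn) as [Hex Hb].
  - intros n. apply Rle_trans with (sum_n (from_y (term m) y) (max n (S A'))).
    apply sum_n_mono; auto. lia.
    specialize (PS (max n (S A')) ltac:(lia)). specialize (Hgm (max n (S A')) ltac:(lia)).
    apply Rabs_le_between in PS. lra.
  - intros eps He. destruct (gm_small m eps Hm He) as [N0 HN0].
    exists (max N0 (S A')). specialize (PS (max N0 (S A')) ltac:(lia)).
    specialize (HN0 (max N0 (S A')) ltac:(lia)). apply Rabs_le_between in PS. lra.
  - split; auto. apply Rabs_le. unfold gm, fm in Hb. unfold Rdiv in *. lra.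
Qed.

Definition pw (n : nat) (s : R) : R := exp (- s * ln (INR n)).
Definition zs (n : nat) (s : R) : R := if Nat.eq_dec n 0 then 0 else pw n s.

Lemma pw_pos n s : 0 < pw n s.
Proof. apply exp_pos. Qed.

Lemma zs_nonneg n s : 0 <= zs n s.
Proof. unfold zs. destruct Nat.eq_dec. lra. left; apply pw_pos. Qed.

Lemma pw_mult d k s : (1 <= d)%nat -> (1 <= k)%nat -> pw (d * k) s = pw d s * pw k s.
Proof.
  intros Hd Hk. unfold pw. rewrite <- exp_plus. f_equal. rewrite mult_INR, ln_mult. ring.
  apply lt_0_INR; lia. apply lt_0_INR; lia.
Qed.

Lemma zs_mult d k s : (1 <= d)%nat -> zs (d * k) s = pw d s * zs k s.
Proof.
  intros Hd. unfold zs. destruct (Nat.eq_dec k 0).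
  - subst. rewrite Nat.mul_0_r. destruct Nat.eq_dec; [lra|lia].
  - destruct Nat.eq_dec; [lia|]. apply pw_mult; lia.
Qed.

Definition zeta (N : nat) (s : R) : R := sum_n (fun n => zs n s) N.
Definition Z1 (N : nat) (s : R) : R := sum_n (fun n => zs n s * ln (INR n)) N.
Definition FF (N : nat) (s : R) : R := sum_n (fun q => vonMangoldt q * pw q s) N.

Lemma zeta_nonneg N s : 0 <= zeta N s.
Proof. apply sum_n_nonneg. intros; apply zs_nonneg. Qed.

Lemma FF_nonneg N s : 0 <= FF N s.
Proof. apply sum_n_nonneg. intros. apply Rmult_le_pos. apply Lam_ge0. left; apply pw_pos. Qed.

Lemma E1 N M s : (N * N <= M)%nat -> FF N s * zeta N s <= Z1 M s.
Proof.
  intros HM. unfold Z1. rewrite sumdiv by (unfold zs; destruct Nat.eq_dec; lia || auto).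
  unfold FF. rewrite <- sum_n_Rmult_r.
  assert (HNM : (N <= M)%nat) by (destruct N; nia).
  apply Rle_trans with (sum_n (fun d => vonMangoldt d * sum_n (fun k => zs (d * k) s) (M / d)) N).
  - apply sum_n_Rle. intros d Hd. destruct (Nat.eq_dec d 0).
    { subst. rewrite Lam_0. lra. }
    rewrite Rmult_assoc. apply Rmult_le_compat_l. apply Lam_ge0.
    unfold zeta. rewrite <- sum_n_Rmult_l.
    apply Rle_trans with (sum_n (fun k => zs (d * k) s) N).
    + right. apply sum_n_ext_R. intros k. rewrite zs_mult by lia. auto.
    + apply sum_n_mono. apply Nat.div_le_lower_bound; auto. nia. intros; apply zs_nonneg.
  - apply sum_n_mono; auto. intros d. apply Rmult_le_pos. apply Lam_ge0. apply sum_n_nonneg. intros; apply zs_nonneg.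
Qed.

Lemma exp_mono x y : x <= y -> exp x <= exp y.
Proof. intros [H|H]. left; apply exp_increasing; auto. subst; lra. Qed.

Definition h (n : nat) (s : R) : R := zs n s * ln (INR n).

Lemma ln3_ge1 : 1 <= ln 3.
Proof. rewrite <- (ln_exp 1). apply ln_le. apply exp_pos. apply exp_le_3. Qed.

Lemma E3 n s : (3 <= n)%nat -> 1 <= s -> h (S n) s <= h n s.
Proof.
  intros Hn Hs. unfold h, zs. destruct Nat.eq_dec; [lia|]. destruct Nat.eq_dec; [lia|].
  unfold pw. set (a := ln (INR n)). set (b := ln (INR (S n))).
  assert (Ha : 1 <= a).
  { unfold a. apply Rle_trans with (ln 3). apply ln3_ge1. apply ln_le. lra.
    replace 3 with (INR 3) by (simpl; lra). apply le_INR; auto. }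
  assert (Hab : a <= b) by (unfold a, b; apply ln_le; [apply lt_0_INR; lia|apply le_INR; lia]).
  replace (- s * b) with (- s * a + - (s * (b - a))) by ring. rewrite exp_plus.
  assert (E : 1 + s * (b - a) <= exp (s * (b - a))) by apply exp_ineq1_le.
  pose proof (exp_pos (- s * a)).
  assert (exp (- (s * (b - a))) * exp (s * (b - a)) = 1).
  { rewrite <- exp_plus. replace (- (s * (b - a)) + s * (b - a)) with 0 by ring. apply exp_0. }
  assert (0 < exp (- (s * (b - a)))) by apply exp_pos.
  assert (s * (b - a) >= b - a) by nra.
  assert (a * (1 + (b - a)) <= a * exp (s * (b - a))) by (apply Rmult_le_compat_l; lra).
  assert (0 <= (b - a) * (a - 1)) by (apply Rmult_le_pos; lra).
  assert (b <= a * exp (s * (b - a))) by nra.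
  assert (exp (- (s * (b - a))) * b <= a) by nra.
  nra.
Qed.

Lemma conv_exp al y : 0 <= al <= 1 -> y <= 0 -> exp (al * y) <= 1 + al * (exp y - 1).
Proof.
  intros Hal Hy. destruct (Req_dec y 0) as [E|E].
  { subst. rewrite Rmult_0_r, exp_0. lra. }
  set (phi := fun x => 1 + al * (exp x - 1) - exp (al * x)).
  destruct (MVT_cor2 phi (fun x => al * exp x - al * exp (al * x)) y 0 ltac:(lra)) as [c [Hc1 Hc2]].
  { intros c _. apply is_derive_Reals. unfold phi. auto_derive; auto. ring. }
  unfold phi in Hc1. rewrite Rmult_0_r, exp_0 in Hc1.
  assert (exp c <= exp (al * c)).
  { destruct (Req_dec (al * c) c). rewrite H; lra. left. apply exp_increasing. nra. }
  assert (D : al * exp c - al * exp (al * c) <= 0) by nra.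
  assert (D2 : (al * exp c - al * exp (al * c)) * (0 - y) <= 0).
  { assert (0 <= 0 - y) by lra. assert (0 <= - (al * exp c - al * exp (al * c))) by lra. nra. }
  lra.
Qed.

Lemma pw_exp n s : pw n s = exp (- s * ln (INR n)).
Proof. reflexivity. Qed.

Lemma E4 s : 1 <= s -> h 3 s + h 5 s <= h 2 s + h 4 s.
Proof.
  intros Hs. unfold h, zs, pw. simpl (Nat.eq_dec _ _).
  repeat (destruct Nat.eq_dec; [lia|]).
  set (L := ln 2). set (l3 := ln 3). set (l5 := ln 5).
  assert (HL : 0 < L) by apply ln2_pos.
  replace (INR 2) with 2 by (simpl; lra). replace (INR 3) with 3 by (simpl; lra).
  replace (INR 4) with (2 * 2) by (simpl; lra). replace (INR 5) with 5 by (simpl; lra).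
  rewrite ln_mult by lra. fold L l3 l5.
  assert (EL : exp L = 2) by (unfold L; apply exp_ln; lra).
  assert (EL3 : exp l3 = 3) by (unfold l3; apply exp_ln; lra).
  assert (EL5 : exp l5 = 5) by (unfold l5; apply exp_ln; lra).
  assert (H32 : L <= l3) by (apply ln_le; lra).
  assert (H34 : l3 <= L + L) by (unfold l3, L; rewrite <- ln_mult by lra; apply ln_le; lra).
  assert (H54 : L + L <= l5) by (unfold l5, L; rewrite <- ln_mult by lra; apply ln_le; lra).
  assert (Hnum : 5 * l3 + 3 * l5 <= 15 * L).
  { assert (Hh : ln (3 ^ 5 * 5 ^ 3) <= ln (2 ^ 15)).
    { apply ln_le. apply Rmult_lt_0_compat; apply pow_lt; lra. simpl. lra. }
    rewrite ln_mult, !ln_pow in Hh by (try apply pow_lt; lra).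
    replace (INR 5) with 5 in Hh by (simpl; lra). replace (INR 3) with 3 in Hh by (simpl; lra).
    replace (INR 15) with 15 in Hh by (simpl; lra). unfold l3, l5, L. lra. }
  set (t := s - 1). replace s with (1 + t) by (unfold t; ring).
  assert (Ht : 0 <= t) by (unfold t; lra).
  set (X := exp (- L * t)).
  assert (HX : 0 < X <= 1).
  { split. apply exp_pos. unfold X. rewrite <- exp_0. destruct (Req_dec t 0). rewrite H. right. f_equal. ring.
    left. apply exp_increasing. nra. }
  assert (e2 : exp (- (1 + t) * L) = X / 2).
  { replace (- (1 + t) * L) with (- L * t + - L) by ring. rewrite exp_plus, exp_Ropp, EL. fold X. field. }
  assert (e4 : exp (- (1 + t) * (L + L)) = X * X / 4).
  { replace (- (1 + t) * (L + L)) with ((- (1 + t) * L) + (- (1 + t) * L)) by ring. rewrite exp_plus, e2. field. }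
  set (a3 := l3 - L).
  assert (e3 : exp (- (1 + t) * l3) = X * exp (a3 / L * (- L * t)) / 3).
  { replace (- (1 + t) * l3) with (- L * t + (a3 / L * (- L * t)) + - l3) by (unfold a3; field; lra).
    rewrite !exp_plus, exp_Ropp, EL3. fold X. field. }
  assert (e5 : exp (- (1 + t) * l5) <= X * X / 5).
  { replace (- (1 + t) * l5) with (- L * t + (- (l5 - L) * t) + - l5) by ring.
    rewrite !exp_plus, exp_Ropp, EL5. fold X.
    assert (exp (- (l5 - L) * t) <= X).
    { unfold X. apply exp_mono. nra. }
    assert (0 < / 5) by lra. pose proof (exp_pos (- (l5 - L) * t)). nra. }
  assert (Hal : 0 <= a3 / L <= 1).
  { unfold a3. split. apply Rdiv_le_0_compat; lra. apply Rmult_le_reg_r with L; auto.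
    unfold Rdiv. rewrite Rmult_assoc, Rinv_l by lra. lra. }
  pose proof (conv_exp (a3 / L) (- L * t) Hal ltac:(nra)) as Cv. fold X in Cv.
  rewrite e2, e4, e3.
  assert (Hx0 : 2 * l3 * (L + L - l3) <= 3 * L * L) by nra.
  assert (Hl3 : 0 <= l3) by lra. assert (Hl5 : 0 <= l5) by lra.
  assert (K1 : l5 * exp (- (1 + t) * l5) <= l5 * (X * X / 5)) by (apply Rmult_le_compat_l; lra).
  assert (K2 : l3 * (X * exp (a3 / L * (- L * t)) / 3) <= l3 * (X * (1 + a3 / L * (X - 1)) / 3)).
  { apply Rmult_le_compat_l; auto. unfold Rdiv. apply Rmult_le_compat_r. lra. apply Rmult_le_compat_l; lra. }
  assert (Key : l3 * (1 + a3 / L * (X - 1)) / 3 + l5 * X / 5 <= L / 2 * (1 + X)).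
  { assert (Q0 : l3 * (1 - a3 / L) / 3 <= L / 2).
    { unfold a3. replace (l3 * (1 - (l3 - L) / L) / 3) with (l3 * (L + L - l3) / (3 * L)) by (field; lra).
      apply Rmult_le_reg_r with (3 * L). lra. unfold Rdiv. rewrite Rmult_assoc, Rinv_l by lra. nra. }
    assert (Q1 : l3 / 3 + l5 / 5 <= L / 2 + L / 2) by lra.
    replace (l3 * (1 + a3 / L * (X - 1)) / 3 + l5 * X / 5) with
      ((1 - X) * (l3 * (1 - a3 / L) / 3) + X * (l3 / 3 + l5 / 5)) by (field; lra).
    nra. }
  nra.
Qed.

Lemma h_nonneg n s : 0 <= h n s.
Proof.
  unfold h, zs. destruct Nat.eq_dec. lra. apply Rmult_le_pos. left; apply pw_pos.
  rewrite <- ln_1. apply ln_le. lra. replace 1 with (INR 1) by auto. apply le_INR. lia.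
Qed.

Lemma h01 s : h 0 s = 0 /\ h 1 s = 0.
Proof. unfold h, zs. simpl. split. lra. rewrite ln_1. lra. Qed.

Lemma E2 K s : (2 <= K)%nat -> 1 <= s ->
  Z1 (2 * K + 1) s <= 2 * sum_n (fun k => h (2 * k) s) K.
Proof.
  intros HK Hs. unfold Z1. fold (h 0 s).
  change (sum_n (fun n => zs n s * ln (INR n)) (2 * K + 1)) with (sum_n (fun n => h n s) (2 * K + 1)).
  induction HK.
  - simpl (2 * 2 + 1)%nat. rewrite !sum_n_Sn, !sum_n_0. simpl (2 * 0)%nat. simpl (2 * 1)%nat. simpl (2*2)%nat.
    destruct (h01 s) as [H0 H1]. rewrite H0, H1. pose proof (E4 s Hs). lra.
  - replace (2 * S m + 1)%nat with (S (S (2 * m + 1))) by lia.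
    rewrite !sum_n_Sn. replace (S (2 * m + 1)) with (2 * S m)%nat by lia.
    replace (S (2 * S m)) with (S (2 * S m)) by auto.
    pose proof (E3 (2 * S m) s ltac:(lia) Hs). lra.
Qed.

Lemma even_sum K s : sum_n (fun k => h (2 * k) s) K = pw 2 s * (ln 2 * zeta K s + Z1 K s).
Proof.
  unfold zeta, Z1. rewrite Rmult_plus_distr_l, <- sum_n_Rmult_l, <- !sum_n_Rmult_l, <- sum_n_Rplus.
  apply sum_n_ext_R. intros k. unfold h. rewrite zs_mult by lia.
  unfold zs. destruct (Nat.eq_dec k 0). lra.
  rewrite mult_INR, ln_mult. simpl (INR 2). replace (1 + 1) with 2 by lra. ring.
  simpl; lra. apply lt_0_INR; lia.
Qed.

Lemma Z1_mono a b s : (a <= b)%nat -> Z1 a s <= Z1 b s.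
Proof. intros H. apply sum_n_mono; auto. intros; apply h_nonneg. Qed.

Lemma zeta_mono a b s : (a <= b)%nat -> zeta a s <= zeta b s.
Proof. intros H. apply sum_n_mono; auto. intros; apply zs_nonneg. Qed.

Lemma E2' K s : (2 <= K)%nat -> 1 <= s ->
  Z1 (2 * K + 1) s * (1 - 2 * pw 2 s) <= 2 * pw 2 s * ln 2 * zeta (2 * K + 1) s.
Proof.
  intros HK Hs. pose proof (E2 K s HK Hs). rewrite even_sum in H.
  pose proof (zeta_mono K (2 * K + 1) s ltac:(lia)). pose proof (Z1_mono K (2 * K + 1) s ltac:(lia)).
  pose proof (pw_pos 2 s). pose proof ln2_pos.
  assert (pw 2 s * (ln 2 * zeta K s + Z1 K s) <= pw 2 s * (ln 2 * zeta (2*K+1) s + Z1 (2*K+1) s)).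
  { apply Rmult_le_compat_l. lra. apply Rplus_le_compat; auto. apply Rmult_le_compat_l; lra. }
  nra.
Qed.

Lemma tail_term n a : (2 <= n)%nat -> 0 < a -> a * pw n (1 + a) <= pw (n - 1) a - pw n a.
Proof.
  intros Hn Ha. unfold pw.
  assert (Hn0 : 2 <= INR n) by (replace 2 with (INR 2) by (simpl; lra); apply le_INR; auto).
  rewrite minus_INR by lia. simpl (INR 1).
  assert (Hl : ln (INR n - 1) <= ln (INR n) - 1 / INR n).
  { replace (INR n - 1) with (INR n * ((INR n - 1) / INR n)) by (field; lra).
    rewrite ln_mult by (try apply Rdiv_lt_0_compat; lra).
    pose proof (ln_le_sub1 ((INR n - 1) / INR n) ltac:(apply Rdiv_lt_0_compat; lra)).
    replace ((INR n - 1) / INR n - 1) with (- (1 / INR n)) in H by (field; lra). lra. }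
  assert (E1' : exp (- a * ln (INR n)) * exp (a / INR n) <= exp (- a * ln (INR n - 1))).
  { rewrite <- exp_plus. apply exp_mono. unfold Rdiv in *. nra. }
  assert (E2'' : 1 + a / INR n <= exp (a / INR n)) by apply exp_ineq1_le.
  assert (E3' : exp (- (1 + a) * ln (INR n)) = exp (- a * ln (INR n)) / INR n).
  { replace (- (1 + a) * ln (INR n)) with (- a * ln (INR n) + - ln (INR n)) by ring.
    rewrite exp_plus, exp_Ropp, exp_ln by lra. field. lra. }
  rewrite E3'. pose proof (exp_pos (- a * ln (INR n))).
  assert (exp (- a * ln (INR n)) * (1 + a / INR n) <= exp (- a * ln (INR n)) * exp (a / INR n))
    by (apply Rmult_le_compat_l; lra).
  replace (a * (exp (- a * ln (INR n)) / INR n)) with (exp (- a * ln (INR n)) * (1 + a / INR n) - exp (- a * ln (INR n))) by (field; lra).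
  lra.
Qed.

Lemma zeta_tail N M a : (1 <= N)%nat -> (N <= M)%nat -> 0 < a ->
  zeta M (1 + a) - zeta N (1 + a) <= pw N a / a.
Proof.
  intros HN HM Ha.
  assert (Inv : zeta M (1 + a) - zeta N (1 + a) <= (pw N a - pw M a) / a).
  { induction HM.
    - rewrite !Rminus_diag. unfold Rdiv. lra.
    - unfold zeta in *. rewrite sum_n_Sn. unfold zs at 2. destruct Nat.eq_dec; [lia|].
      pose proof (tail_term (S m) a ltac:(lia) Ha). replace (S m - 1)%nat with m in H by lia.
      assert (pw (S m) (1 + a) <= (pw m a - pw (S m) a) / a).
      { apply Rmult_le_reg_l with a; auto. replace (a * ((pw m a - pw (S m) a) / a)) with (pw m a - pw (S m) a) by (field; lra). lra. }
      replace ((pw N a - pw (S m) a) / a) with ((pw N a - pw m a) / a + (pw m a - pw (S m) a) / a) by (field; lra).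
      change (plus (sum_n (fun n : nat => zs n (1 + a)) m) (pw (S m) (1 + a))) with (sum_n (fun n : nat => zs n (1 + a)) m + pw (S m) (1 + a)).
      lra. }
  pose proof (pw_pos M a). apply Rle_trans with (1 := Inv). unfold Rdiv.
  apply Rmult_le_compat_r. left; apply Rinv_0_lt_compat; auto. lra.
Qed.

Definition Rb (u : R) : R := ln 2 * exp (- u * ln 2) / (1 - exp (- u * ln 2)).

Lemma two_pw2 u : 2 * pw 2 (1 + u) = exp (- u * ln 2).
Proof.
  unfold pw. replace (INR 2) with 2 by (simpl; lra).
  replace (- (1 + u) * ln 2) with (- u * ln 2 + - ln 2) by ring.
  rewrite exp_plus, exp_Ropp, exp_ln by lra. field.
Qed.

Lemma exp_neg_lt1 x : 0 < x -> exp (- x) < 1.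
Proof. intros H. rewrite <- exp_0. apply exp_increasing. lra. Qed.

Lemma zeta_ge1 N s : (1 <= N)%nat -> 1 <= zeta N s.
Proof.
  intros HN. unfold zeta. replace 1 with (zs 1 s).
  apply sum_n_term_le with (u := fun n => zs n s); auto. intros; apply zs_nonneg.
  unfold zs, pw. simpl. rewrite ln_1, Rmult_0_r. apply exp_0.
Qed.

Lemma FF_almost N u : (1 <= N)%nat -> 0 < u -> FF N (1 + u) <= Rb u * (1 + pw N u / u).
Proof.
  intros HN Hu. set (s := 1 + u). set (K := Nat.max 2 (N * N)). set (M := (2 * K + 1)%nat).
  pose proof (E1 N M s ltac:(unfold M, K; lia)) as H1.
  pose proof (E2' K s ltac:(unfold K; lia) ltac:(unfold s; lra)) as H2. fold M in H2.
  pose proof (zeta_tail N M u HN ltac:(unfold M, K; nia) Hu) as H3. fold s in H3.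
  pose proof (two_pw2 u) as E. fold s in E. rewrite Rmult_assoc in H2. rewrite E in H2.
  set (q := exp (- u * ln 2)) in *.
  assert (Hq : 0 < q < 1).
  { split. apply exp_pos. unfold q. replace (- u * ln 2) with (- (u * ln 2)) by ring.
    apply exp_neg_lt1. pose proof ln2_pos. nra. }
  pose proof (zeta_ge1 N s HN) as Z. pose proof ln2_pos as L2.
  pose proof (FF_nonneg N s). pose proof (pw_pos N u).
  assert (Hz : 0 <= Z1 M s) by (apply sum_n_nonneg; intros; apply h_nonneg).
  assert (A : FF N s * zeta N s * (1 - q) <= q * ln 2 * (zeta N s + pw N u / u)).
  { apply Rle_trans with (Z1 M s * (1 - q)). apply Rmult_le_compat_r; lra.
    eapply Rle_trans. apply H2. rewrite <- Rmult_assoc. apply Rmult_le_compat_l. nra. lra. }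
  unfold Rb. fold q.
  assert (B : FF N s * zeta N s <= q * ln 2 / (1 - q) * (zeta N s + pw N u / u)).
  { apply Rmult_le_reg_r with (1 - q). lra.
    replace (q * ln 2 / (1 - q) * (zeta N s + pw N u / u) * (1 - q)) with (q * ln 2 * (zeta N s + pw N u / u)) by (field; lra).
    auto. }
  assert (C : q * ln 2 / (1 - q) * (zeta N s + pw N u / u) <= q * ln 2 / (1 - q) * (1 + pw N u / u) * zeta N s).
  { assert (0 <= q * ln 2 / (1 - q)) by (apply Rdiv_le_0_compat; nra).
    assert (0 <= pw N u / u) by (apply Rdiv_le_0_compat; lra).
    rewrite Rmult_assoc. apply Rmult_le_compat_l; auto. nra. }
  replace (ln 2 * q / (1 - q)) with (q * ln 2 / (1 - q)) by (field; lra).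
  apply Rmult_le_reg_r with (zeta N s). lra. lra.
Qed.

Lemma pw_small a eps : 0 < a -> 0 < eps -> exists N0 : nat, forall N, (N0 <= N)%nat -> pw N a <= eps.
Proof.
  intros Ha He. destruct (floor_exists (exp (- ln eps / a) + 1)) as [K [_ HK]].
  pose proof (exp_pos (- ln eps / a)). lra.
  exists K. intros N HN. unfold pw.
  assert (HN2 : exp (- ln eps / a) < INR N) by (apply le_INR in HN; lra).
  assert (H0 : - ln eps / a <= ln (INR N)).
  { rewrite <- (ln_exp (- ln eps / a)). apply ln_le. apply exp_pos. lra. }
  rewrite <- (exp_ln eps) by auto. apply exp_mono.
  apply Rmult_le_compat_l with (r := a) in H0; [|lra].
  replace (a * (- ln eps / a)) with (- ln eps) in H0 by (field; lra). lra.
Qed.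

Theorem Fbound N u : 0 < u -> FF N (1 + u) <= Rb u.
Proof.
  intros Hu. apply Rnot_lt_le. intros Hc.
  assert (HR : 0 <= Rb u).
  { unfold Rb. pose proof ln2_pos. assert (0 < exp (- u * ln 2) < 1).
    { split. apply exp_pos. replace (- u * ln 2) with (- (u * ln 2)) by ring. apply exp_neg_lt1. nra. }
    apply Rdiv_le_0_compat; nra. }
  set (d := FF N (1 + u) - Rb u).
  assert (Hd : 0 < d) by (unfold d; lra).
  set (eps := d / (Rb u + 1) * u).
  assert (He : 0 < eps) by (unfold eps; apply Rmult_lt_0_compat; auto; apply Rdiv_lt_0_compat; lra).
  destruct (pw_small u eps Hu He) as [N0 HN0].
  set (N' := Nat.max (Nat.max N0 N) 1).
  pose proof (FF_almost N' u ltac:(unfold N'; lia) Hu).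
  assert (FF N (1 + u) <= FF N' (1 + u)).
  { apply sum_n_mono. unfold N'; lia. intros. apply Rmult_le_pos. apply Lam_ge0. left; apply pw_pos. }
  specialize (HN0 N' ltac:(unfold N'; lia)).
  assert (pw N' u / u <= d / (Rb u + 1)).
  { apply Rmult_le_reg_r with u; auto. unfold Rdiv at 1. rewrite Rmult_assoc, Rinv_l, Rmult_1_r by lra.
    unfold eps in HN0. lra. }
  assert (Rb u * (pw N' u / u) <= Rb u * (d / (Rb u + 1))) by (apply Rmult_le_compat_l; auto).
  assert (Rb u * (d / (Rb u + 1)) < d).
  { apply Rmult_lt_reg_r with (Rb u + 1). lra.
    replace (Rb u * (d / (Rb u + 1)) * (Rb u + 1)) with (Rb u * d) by (field; lra). nra. }
  unfold d in *. lra.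
Qed.

Lemma RInt_sum_n (g : nat -> R -> R) a b N :
  (forall q, (q <= N)%nat -> ex_RInt (g q) a b) ->
  ex_RInt (fun u => sum_n (fun q => g q u) N) a b /\
  RInt (fun u => sum_n (fun q => g q u) N) a b = sum_n (fun q => RInt (g q) a b) N.
Proof.
  intros H. induction N.
  - split. apply ex_RInt_ext with (g 0%nat). intros; rewrite sum_n_0; auto. apply H; lia.
    rewrite sum_n_0. apply RInt_ext. intros; rewrite sum_n_0; auto.
  - destruct IHN as [E1 E2]. intros; apply H; lia.
    assert (E3 : ex_RInt (g (S N)) a b) by (apply H; lia).
    split.
    + apply ex_RInt_ext with (fun u => plus (sum_n (fun q => g q u) N) (g (S N) u)).
      intros; rewrite sum_n_Sn; auto. apply (ex_RInt_plus (fun u => sum_n (fun q => g q u) N) (g (S N))); auto.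
    + transitivity (plus (RInt (fun u => sum_n (fun q => g q u) N) a b) (RInt (g (S N)) a b)).
      * rewrite <- (RInt_plus (fun u => sum_n (fun q => g q u) N) (g (S N))) by auto. apply RInt_ext. intros; rewrite sum_n_Sn; auto.
      * rewrite sum_n_Sn, E2. reflexivity.
Qed.

Lemma ex_RInt_der (f : R -> R) a b : (forall x, ex_derive f x) -> ex_RInt f a b.
Proof. intros H. apply (ex_RInt_continuous (V:=R_CompleteNormedModule)). intros z _.
 apply continuity_pt_filterlim. apply derivable_continuous_pt. apply ex_derive_Reals_0. apply H. Qed.

Lemma int_exp k U : 0 < k -> is_RInt (fun u => exp (- k * u)) 0 U ((1 - exp (- k * U)) / k).
Proof.
  intros Hk.
  replace ((1 - exp (- k * U)) / k) with (minus ((fun u => - exp (- k * u) / k) U) ((fun u => - exp (- k * u) / k) 0)).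
  2:{ unfold minus, plus, opp; simpl. rewrite Rmult_0_r, exp_0. field. lra. }
  apply (is_RInt_derive (V:=R_CompleteNormedModule) (fun u => - exp (- k * u) / k)). intros x _. auto_derive; auto. field. lra.
  intros x _. apply continuity_pt_filterlim. apply derivable_continuous_pt. apply ex_derive_Reals_0. auto_derive; auto.
Qed.

Lemma int_u_exp c U : 0 < c -> is_RInt (fun u => u * exp (- c * u)) 0 U (1 / c ^ 2 - exp (- c * U) * (U / c + 1 / c ^ 2)).
Proof.
  intros Hc.
  replace (1 / c ^ 2 - exp (- c * U) * (U / c + 1 / c ^ 2)) with
    (minus ((fun u => - exp (- c * u) * (u / c + 1 / c ^ 2)) U) ((fun u => - exp (- c * u) * (u / c + 1 / c ^ 2)) 0)).
  2:{ unfold minus, plus, opp; simpl. rewrite Rmult_0_r, exp_0. field. lra. }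
  apply (is_RInt_derive (V:=R_CompleteNormedModule) (fun u => - exp (- c * u) * (u / c + 1 / c ^ 2))). intros x _. auto_derive; auto. field. lra.
  intros x _. apply continuity_pt_filterlim. apply derivable_continuous_pt. apply ex_derive_Reals_0. auto_derive; auto.
Qed.

Lemma int_1m_exp c L U : 0 < c -> 0 < L ->
  is_RInt (fun u => (1 - exp (- L * u)) * exp (- c * u)) 0 U
    ((1 - exp (- c * U)) / c - (1 - exp (- (c + L) * U)) / (c + L)).
Proof.
  intros Hc HL.
  replace ((1 - exp (- c * U)) / c - (1 - exp (- (c + L) * U)) / (c + L)) with
    (minus ((fun u => - exp (- c * u) / c + exp (- (c + L) * u) / (c + L)) U)
           ((fun u => - exp (- c * u) / c + exp (- (c + L) * u) / (c + L)) 0)).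
  2:{ unfold minus, plus, opp; simpl. rewrite !Rmult_0_r, exp_0. field. lra. }
  apply (is_RInt_derive (V:=R_CompleteNormedModule) (fun u => - exp (- c * u) / c + exp (- (c + L) * u) / (c + L))). intros x _. auto_derive; auto.
  replace (- (c + L) * x) with (- L * x + - c * x) by ring. rewrite exp_plus. field. lra.
  intros x _. apply continuity_pt_filterlim. apply derivable_continuous_pt. apply ex_derive_Reals_0. auto_derive; auto.
Qed.

Lemma decay y : 0 <= y -> (1 + y) * exp (- y) <= 4 / (2 + y).
Proof.
  intros Hy.
  assert (E : exp y = exp (y / 2) * exp (y / 2)) by (rewrite <- exp_plus; f_equal; field).
  pose proof (exp_ineq1_le (y / 2)).
  assert ((1 + y / 2) * (1 + y / 2) <= exp y) by (rewrite E; apply Rmult_le_compat; lra).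
  assert (Hm : exp (- y) * exp y = 1) by (rewrite <- exp_plus; replace (- y + y) with 0 by ring; apply exp_0).
  pose proof (exp_pos (- y)).
  apply Rmult_le_reg_r with ((2 + y) * exp y). apply Rmult_lt_0_compat. lra. apply exp_pos.
  replace (4 / (2 + y) * ((2 + y) * exp y)) with (4 * exp y) by (field; lra).
  replace ((1 + y) * exp (- y) * ((2 + y) * exp y)) with ((1 + y) * (2 + y) * (exp (- y) * exp y)) by ring.
  rewrite Hm. nra.
Qed.

Lemma small_U L K eps : 0 < L -> 0 <= K -> 0 < eps ->
  exists U, 0 <= U /\ K * (exp (- L * U) * (U / L + 1 / L ^ 2)) <= eps.
Proof.
  intros HL HK He.
  set (y := 4 * (K + 1) / (L ^ 2 * eps)).
  assert (Hy : 0 <= y) by (unfold y; apply Rdiv_le_0_compat; [lra|]; apply Rmult_lt_0_compat; [apply pow_lt|]; lra).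
  exists (y / L). split. apply Rdiv_le_0_compat; lra.
  replace (- L * (y / L)) with (- y) by (field; lra).
  replace (exp (- y) * (y / L / L + 1 / L ^ 2)) with ((1 + y) * exp (- y) / L ^ 2) by (field; lra).
  pose proof (decay y Hy). assert (0 < L ^ 2) by (apply pow_lt; lra).
  apply Rle_trans with (K * (4 / (2 + y) / L ^ 2)).
  apply Rmult_le_compat_l; auto. unfold Rdiv. apply Rmult_le_compat_r. left; apply Rinv_0_lt_compat; auto. auto.
  apply Rle_trans with ((K + 1) * (4 / y / L ^ 2)).
  - destruct (Req_dec y 0) as [Y|Y].
    { exfalso. unfold y in Y. assert (0 < 4 * (K + 1) / (L ^ 2 * eps)). apply Rdiv_lt_0_compat. lra. apply Rmult_lt_0_compat; lra. lra. }
    assert (Q1 : 0 <= 4 / (2 + y) / L ^ 2) by (apply Rdiv_le_0_compat; [apply Rdiv_le_0_compat|]; lra).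
    assert (Q2 : 4 / (2 + y) / L ^ 2 <= 4 / y / L ^ 2).
    { unfold Rdiv. apply Rmult_le_compat_r. left; apply Rinv_0_lt_compat; auto.
      apply Rmult_le_compat_l. lra. apply Rinv_le_contravar; lra. }
    apply Rmult_le_compat; lra.
  - right. unfold y. field. repeat split; lra.
Qed.

Lemma le_eps a b : (forall eps, 0 < eps -> a <= b + eps) -> a <= b.
Proof.
  intros H. apply Rnot_lt_le. intros Hc. specialize (H ((a - b) / 2) ltac:(lra)). lra.
Qed.

Lemma INR_ge1 n : (1 <= n)%nat -> 1 <= INR n.
Proof. intros H. replace 1 with (INR 1) by auto. apply le_INR; auto. Qed.

Lemma RInt_zero a b : RInt (fun _ : R => 0) a b = 0.
Proof. rewrite RInt_const. apply Rmult_0_r. Qed.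

Lemma RInt_scal_R (k : R) (f : R -> R) a b l : is_RInt f a b l -> RInt (fun u => k * f u) a b = k * l.
Proof. intros H. apply is_RInt_unique. apply (is_RInt_scal f a b k l H). Qed.

Lemma g_sum_identity m N u (w : R -> R) : (1 <= m)%nat ->
  sum_n (fun q => vonMangoldt q / INR q * (w u * exp (- ln (INR m * INR q) * u))) N =
  w u * exp (- ln (INR m) * u) * FF N (1 + u).
Proof.
  intros Hm. unfold FF. rewrite <- sum_n_Rmult_l. apply sum_n_ext_R. intros q.
  destruct (Nat.eq_dec q 0). { subst. rewrite Lam_0. unfold Rdiv. ring. }
  assert (0 < INR q) by (apply lt_0_INR; lia). assert (0 < INR m) by (apply lt_0_INR; lia).
  unfold pw. rewrite ln_mult by lra.
  replace (- (1 + u) * ln (INR q)) with (- ln (INR q) * u + - ln (INR q)) by ring.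
  rewrite exp_plus, exp_Ropp, exp_ln by lra.
  replace (- (ln (INR m) + ln (INR q)) * u) with (- ln (INR m) * u + - ln (INR q) * u) by ring.
  rewrite exp_plus. field. lra.
Qed.

Theorem part_iii m : (1 <= m)%nat ->
  let f := fun q : nat =>
       vonMangoldt q / (INR q * ln (INR m * INR q) * ln (2 * INR m * INR q)) in
  ex_series f /\ Series f <= 1 / ln (2 * INR m).
Proof.
  intros Hm f.
  set (L := ln 2). assert (HL : 0 < L) by apply ln2_pos.
  set (lm := ln (INR m)).
  assert (Hm1 : 1 <= INR m) by (apply INR_ge1; auto).
  assert (Hlm : 0 <= lm) by (unfold lm; rewrite <- ln_1; apply ln_le; lra).
  assert (E2m : ln (2 * INR m) = L + lm) by (unfold L, lm; apply ln_mult; lra).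
  assert (Hf0 : forall q, 0 <= f q).
  { intros q. unfold f, Rdiv. apply Rmult_le_pos. apply Lam_ge0. apply Rinv_nonneg.
    destruct (Nat.eq_dec q 0). subst. simpl. lra.
    assert (1 <= INR q) by (apply INR_ge1; lia).
    assert (0 <= ln (INR m * INR q)) by (rewrite <- ln_1; apply ln_le; nra).
    assert (0 <= ln (2 * INR m * INR q)) by (rewrite <- ln_1; apply ln_le; nra).
    apply Rmult_le_pos; [apply Rmult_le_pos|]; lra. }
  assert (Key : forall N, sum_n f N <= 1 / ln (2 * INR m)).
  { intros N. rewrite E2m. apply le_eps. intros eps He.
    assert (HT : 0 <= T N) by (apply sum_n_nonneg; intros; unfold Rdiv; apply Rmult_le_pos; [apply Lam_ge0|apply Rinv_nonneg, pos_INR]).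
    destruct (small_U L (T N) eps HL HT He) as [U [HU HUe]].
    set (c := fun q : nat => ln (INR m * INR q)).
    set (g := fun (q : nat) (u : R) => vonMangoldt q / INR q * ((1 - exp (- L * u)) * exp (- c q * u))).
    set (KK := fun q : nat => (1 - exp (- c q * U)) / c q - (1 - exp (- (c q + L) * U)) / (c q + L)).
    assert (Hg : forall q, RInt (g q) 0 U = vonMangoldt q / INR q * (if le_dec q 1 then 0 else KK q)).
    { intros q. destruct le_dec.
      - rewrite Rmult_0_r. assert (vonMangoldt q = 0) by (destruct q; [apply Lam_0|destruct q; [apply Lam_1|lia]]).
        unfold g. rewrite H. rewrite (RInt_ext _ (fun _ => 0)). rewrite RInt_zero. reflexivity.
        intros x _. unfold Rdiv. rewrite !Rmult_0_l. reflexivity.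
      - apply RInt_scal_R. apply int_1m_exp; auto. unfold c. apply ln_m_pos; auto.
        replace 2 with (INR 2) by (simpl; lra). apply le_INR; lia. }
    assert (Hexg : forall q, ex_RInt (g q) 0 U).
    { intros q. apply ex_RInt_der. intros x. unfold g. auto_derive. auto. }
    destruct (RInt_sum_n g 0 U N (fun q _ => Hexg q)) as [Hex Hsum].
    assert (Hcmp : RInt (fun u => sum_n (fun q => g q u) N) 0 U <= RInt (fun u => L * exp (- (lm + L) * u)) 0 U).
    { apply RInt_le; auto. apply ex_RInt_der. intros x. auto_derive. auto.
      intros u Hu. unfold g, c.
      rewrite (g_sum_identity m N u (fun u => 1 - exp (- L * u)) Hm). fold lm.
      pose proof (Fbound N u ltac:(lra)). unfold Rb in H. fold L in H.
      assert (Hq : 0 < exp (- u * L) < 1).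
      { split. apply exp_pos. replace (- u * L) with (- (u * L)) by ring. apply exp_neg_lt1. nra. }
      replace (- L * u) with (- u * L) by ring.
      assert (0 <= 1 - exp (- u * L)) by lra.
      pose proof (exp_pos (- lm * u)).
      apply Rle_trans with ((1 - exp (- u * L)) * exp (- lm * u) * (L * exp (- u * L) / (1 - exp (- u * L)))).
      apply Rmult_le_compat_l; auto. apply Rmult_le_pos; lra.
      right. replace (- (lm + L) * u) with (- lm * u + - u * L) by ring. rewrite exp_plus. field. lra. }
    rewrite (RInt_scal_R L (fun u => exp (- (lm + L) * u)) 0 U _ (int_exp (lm + L) U ltac:(lra))) in Hcmp.
    rewrite Hsum in Hcmp.
    assert (Hterm : forall q, (q <= N)%nat ->
      f q <= / L * RInt (g q) 0 U + vonMangoldt q / INR q * (exp (- L * U) / L ^ 2)).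
    { intros q Hq. rewrite Hg. destruct le_dec.
      - assert (vonMangoldt q = 0) by (destruct q; [apply Lam_0|destruct q; [apply Lam_1|lia]]).
        unfold f. rewrite H. unfold Rdiv. lra.
      - assert (HcL : L <= c q).
        { unfold c, L. apply ln_le. lra. assert (2 <= INR q) by (replace 2 with (INR 2) by (simpl; lra); apply le_INR; lia). nra. }
        assert (Hq0 : 0 < INR q) by (apply lt_0_INR; lia).
        assert (Ef : f q = vonMangoldt q / INR q * (1 / (c q * (c q + L)))).
        { unfold f. replace (2 * INR m * INR q) with (2 * (INR m * INR q)) by ring.
          rewrite (ln_mult 2) by nra. change (ln 2) with L. change (ln (INR m * INR q)) with (c q).
          field. repeat split; lra. }
        rewrite Ef. unfold KK.
        assert (0 <= vonMangoldt q / INR q) by (unfold Rdiv; apply Rmult_le_pos; [apply Lam_ge0|left; apply Rinv_0_lt_compat; auto]).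
        replace (/ L * (vonMangoldt q / INR q * ((1 - exp (- c q * U)) / c q - (1 - exp (- (c q + L) * U)) / (c q + L))))
          with (vonMangoldt q / INR q * (/ L * ((1 - exp (- c q * U)) / c q - (1 - exp (- (c q + L) * U)) / (c q + L)))) by ring.
        rewrite <- Rmult_plus_distr_l. apply Rmult_le_compat_l; auto.
        assert (E1 : exp (- c q * U) <= exp (- L * U)) by (apply exp_mono; nra).
        pose proof (exp_pos (- (c q + L) * U)). pose proof (exp_pos (- c q * U)).
        assert (E3 : exp (- c q * U) / c q <= exp (- L * U) / L).
        { unfold Rdiv. apply Rmult_le_compat; try lra. left; apply Rinv_0_lt_compat; lra.
          apply Rinv_le_contravar; lra. }
        assert (E4 : 0 <= exp (- (c q + L) * U) / (c q + L)) by (apply Rdiv_le_0_compat; lra).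
        replace (/ L * ((1 - exp (- c q * U)) / c q - (1 - exp (- (c q + L) * U)) / (c q + L)))
          with (1 / (c q * (c q + L)) - / L * (exp (- c q * U) / c q) + / L * (exp (- (c q + L) * U) / (c q + L)))
          by (field; lra).
        assert (/ L * (exp (- c q * U) / c q) <= / L * (exp (- L * U) / L)) by (apply Rmult_le_compat_l; [left; apply Rinv_0_lt_compat|]; lra).
        assert (0 <= / L * (exp (- (c q + L) * U) / (c q + L))) by (apply Rmult_le_pos; [left; apply Rinv_0_lt_compat|]; lra).
        replace (exp (- L * U) / L ^ 2) with (/ L * (exp (- L * U) / L)) by (field; lra). lra. }
    apply Rle_trans with (sum_n (fun q => / L * RInt (g q) 0 U + vonMangoldt q / INR q * (exp (- L * U) / L ^ 2)) N).
    { apply sum_n_Rle. auto. }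
    rewrite sum_n_Rplus, sum_n_Rmult_l, sum_n_Rmult_r. fold (T N).
    assert (/ L * sum_n (fun q => RInt (g q) 0 U) N <= / L * (L * ((1 - exp (- (lm + L) * U)) / (lm + L)))).
    { apply Rmult_le_compat_l. left; apply Rinv_0_lt_compat; auto. exact Hcmp. }
    replace (L + lm) with (lm + L) by ring.
    assert (/ L * (L * ((1 - exp (- (lm + L) * U)) / (lm + L))) <= 1 / (lm + L)).
    { replace (/ L * (L * ((1 - exp (- (lm + L) * U)) / (lm + L)))) with ((1 - exp (- (lm + L) * U)) / (lm + L)) by (field; lra).
      unfold Rdiv. apply Rmult_le_compat_r. left; apply Rinv_0_lt_compat; lra.
      pose proof (exp_pos (- (lm + L) * U)). lra. }
    assert (T N * (exp (- L * U) / L ^ 2) <= eps).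
    { eapply Rle_trans; [|apply HUe]. apply Rmult_le_compat_l; auto.
      pose proof (exp_pos (- L * U)). assert (0 <= U / L) by (apply Rdiv_le_0_compat; lra).
      unfold Rdiv. nra. }
    apply Rplus_le_compat; [eapply Rle_trans; [apply H|apply H0]|apply H1]. }
  destruct (series_bounds f 0 (1 / ln (2 * INR m)) Hf0 Key) as [Hex Hb].
  { intros eps He. exists 0%nat. rewrite sum_n_0. specialize (Hf0 0%nat). lra. }
  split; auto. lra.
Qed.

Lemma partial_le_series (a : nat -> R) n : (forall k, 0 <= a k) -> ex_series a -> sum_n a n <= Series a.
Proof.
  intros Ha He. apply (is_lim_seq_incr_compare (sum_n a) (Series a)).
  apply Series_correct; auto. intros k. rewrite sum_n_Sn. specialize (Ha (S k)). unfold plus; simpl; lra.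
Qed.

Lemma aj_series x : 1 <= x ->
  ex_series (fun j : nat => x / (x + INR (S j)) ^ 2) /\
  0 <= Series (fun j : nat => x / (x + INR (S j)) ^ 2) <= x / (x + 1 / 2).
Proof.
  intros Hx. apply series_bounds.
  - intros n. apply Rdiv_le_0_compat. lra. pose proof (pos_INR (S n)). nra.
  - intros n. assert (Inv : sum_n (fun j => x / (x + INR (S j)) ^ 2) n <= x * (1 / (x + 1 / 2) - 1 / (x + INR n + 3 / 2))).
    { induction n.
      - rewrite sum_n_0. replace (INR 1) with 1 by auto. replace (INR 0) with 0 by auto.
        replace (x * (1 / (x + 1 / 2) - 1 / (x + 0 + 3 / 2))) with (x / ((x + 1/2) * (x + 3/2))) by (field; lra).
        unfold Rdiv. apply Rmult_le_compat_l. lra. apply Rinv_le_contravar. nra. nra.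
      - rewrite sum_n_Sn. unfold plus; simpl (AbelianMonoid.plus _ _).
        assert (Hs : x / (x + INR (S (S n))) ^ 2 <= x * (1 / (x + INR n + 3 / 2) - 1 / (x + INR (S n) + 3 / 2))).
        { rewrite !S_INR. pose proof (pos_INR n).
          replace (x * (1 / (x + INR n + 3 / 2) - 1 / (x + (INR n + 1) + 3 / 2))) with (x / ((x + INR n + 3/2) * (x + INR n + 5/2))) by (field; lra).
          unfold Rdiv. apply Rmult_le_compat_l. lra. apply Rinv_le_contravar.
          apply Rmult_lt_0_compat; lra. simpl. nra. }
        lra. }
    eapply Rle_trans. apply Inv. pose proof (pos_INR n).
    assert (0 <= x * (1 / (x + INR n + 3 / 2))) by (apply Rmult_le_pos; [lra|]; apply Rdiv_le_0_compat; lra). 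
    lra.
  - intros eps He. exists 0%nat. rewrite sum_n_0. assert (0 <= x / (x + INR 1) ^ 2) by (apply Rdiv_le_0_compat; [lra|]; simpl; nra). lra.
Qed.

Lemma geom L a n : 0 < a ->
  L * exp (- a) / (1 - exp (- a)) =
  L * sum_n (fun j => exp (- INR (S j) * a)) n + L * exp (- INR (S (S n)) * a) / (1 - exp (- a)).
Proof.
  intros Ha. assert (Hq : exp (- a) < 1) by (apply exp_neg_lt1; auto).
  induction n.
  - rewrite sum_n_0. replace (- INR 1 * a) with (- a) by (simpl; ring).
    replace (- INR 2 * a) with (- a + - a) by (simpl; ring). rewrite exp_plus. field. lra.
  - rewrite IHn, sum_n_Sn. unfold plus; simpl (AbelianMonoid.plus _ _).
    replace (- INR (S (S (S n))) * a) with (- INR (S (S n)) * a + - a) by (rewrite (S_INR (S (S n))); ring).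
    rewrite exp_plus. field. lra.
Qed.

Lemma pointwise_ii m N n u : (2 <= INR m) -> 0 < u ->
  u * exp (- ln (INR m) * u) * FF N (1 + u) <=
  sum_n (fun j => ln 2 * (u * exp (- (ln (INR m) + INR (S j) * ln 2) * u))) n
  + exp (- (ln (INR m) + INR (S n) * ln 2) * u).
Proof.
  intros Hm Hu. set (L := ln 2). set (lm := ln (INR m)).
  assert (HL : 0 < L) by apply ln2_pos.
  pose proof (Fbound N u Hu) as F. unfold Rb in F. fold L in F.
  set (a := u * L). assert (Ha : 0 < a) by (unfold a; nra).
  replace (- u * L) with (- a) in F by (unfold a; ring).
  rewrite (geom L a n Ha) in F.
  assert (Hq : 0 < exp (- a) < 1) by (split; [apply exp_pos|apply exp_neg_lt1; auto]).
  assert (E1 : forall k, exp (- lm * u) * exp (- k * a) = exp (- (lm + k * L) * u)).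
  { intros k. rewrite <- exp_plus. f_equal. unfold a. ring. }
  pose proof (exp_pos (- lm * u)) as P.
  apply Rle_trans with (u * exp (- lm * u) * (L * sum_n (fun j => exp (- INR (S j) * a)) n + L * exp (- INR (S (S n)) * a) / (1 - exp (- a)))).
  { apply Rmult_le_compat_l. nra. auto. }
  rewrite Rmult_plus_distr_l. apply Rplus_le_compat.
  - rewrite <- sum_n_Rmult_l, <- sum_n_Rmult_l. right. apply sum_n_ext_R. intros j.
    rewrite <- (E1 (INR (S j))). ring.
  - rewrite <- (E1 (INR (S n))).
    replace (- INR (S (S n)) * a) with (- INR (S n) * a + - a) by (rewrite (S_INR (S n)); ring).
    rewrite exp_plus.
    pose proof (exp_pos (- INR (S n) * a)).
    assert (Hk : u * L * exp (- a) <= 1 - exp (- a)).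
    { fold a. pose proof (exp_ineq1_le a).
      assert (exp (- a) * exp a = 1) by (rewrite <- exp_plus; replace (- a + a) with 0 by ring; apply exp_0).
      nra. }
    apply Rle_trans with (exp (- lm * u) * exp (- INR (S n) * a) * (u * L * exp (- a) / (1 - exp (- a)))).
    right. field. lra.
    rewrite <- (Rmult_1_r (exp (- lm * u) * exp (- INR (S n) * a))) at 2.
    apply Rmult_le_compat_l. nra.
    apply Rmult_le_reg_r with (1 - exp (- a)). lra. unfold Rdiv. rewrite Rmult_assoc, Rinv_l by lra. lra.
Qed.

Theorem part_ii m x : (1 <= m)%nat -> 1 <= x -> INR m = Rpower 2 x ->
  ex_series (term m) /\
  ex_series (fun j : nat => x / (x + INR (S j)) ^ 2) /\
  ln (INR m) * Series (term m) <= Series (fun j : nat => x / (x + INR (S j)) ^ 2) /\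
  Series (fun j : nat => x / (x + INR (S j)) ^ 2) <= x / (x + 1 / 2) /\
  x / (x + 1 / 2) <= 1.
Proof.
  intros Hm Hx Hmx.
  set (L := ln 2). assert (HL : 0 < L) by apply ln2_pos.
  set (lm := ln (INR m)).
  assert (Hlm : lm = x * L) by (unfold lm, L; rewrite Hmx; unfold Rpower; apply ln_exp).
  assert (Hm2 : 2 <= INR m).
  { rewrite Hmx. unfold Rpower. rewrite <- (exp_ln 2) at 1 by lra. apply exp_mono. fold L. nra. }
  assert (Hlm0 : 0 < lm) by (rewrite Hlm; nra).
  destruct (aj_series x Hx) as [Hexa [HS0 HS1]].
  set (a := fun j : nat => x / (x + INR (S j)) ^ 2) in *.
  set (SS := Series a) in *.
  assert (Ha0 : forall j, 0 <= a j).
  { intros j. unfold a. apply Rdiv_le_0_compat. lra. pose proof (pos_INR (S j)). nra. }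
  assert (Key : forall N, lm * sum_n (term m) N <= SS).
  { intros N. apply le_eps. intros eps He.
    assert (HT : 0 <= lm * T N).
    { apply Rmult_le_pos. lra. apply sum_n_nonneg; intros; unfold Rdiv; apply Rmult_le_pos; [apply Lam_ge0|apply Rinv_nonneg, pos_INR]. }
    destruct (small_U L (lm * T N) (eps / 2) HL HT ltac:(lra)) as [U [HU HUe]].
    destruct (floor_exists (2 * lm / (L * eps))) as [n [_ Hn]].
    { apply Rdiv_le_0_compat. lra. nra. }
    set (c := fun q : nat => ln (INR m * INR q)).
    set (g := fun (q : nat) (u : R) => vonMangoldt q / INR q * (u * exp (- c q * u))).
    set (K2 := fun (c0 : R) => 1 / c0 ^ 2 - exp (- c0 * U) * (U / c0 + 1 / c0 ^ 2)).
    assert (Hcq : forall q, (1 <= q)%nat -> L <= c q).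
    { intros q Hq. unfold c, L. apply ln_le. lra. pose proof (INR_ge1 q Hq). nra. }
    assert (Hg : forall q, RInt (g q) 0 U = vonMangoldt q / INR q * (if Nat.eq_dec q 0 then 0 else K2 (c q))).
    { intros q. destruct Nat.eq_dec.
      - subst. rewrite Rmult_0_r. unfold g. rewrite Lam_0. rewrite (RInt_ext _ (fun _ => 0)). rewrite RInt_zero. reflexivity.
        intros y _. unfold Rdiv. rewrite !Rmult_0_l. reflexivity.
      - apply RInt_scal_R. apply int_u_exp. pose proof (Hcq q ltac:(lia)). lra. }
    assert (Hexg : forall q, ex_RInt (g q) 0 U).
    { intros q. apply ex_RInt_der. intros y. unfold g. auto_derive. auto. }
    destruct (RInt_sum_n g 0 U N (fun q _ => Hexg q)) as [Hex Hsum].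
    set (k := fun j : nat => lm + INR (S j) * L).
    assert (Hk : forall j, 0 < k j) by (intros j; unfold k; pose proof (pos_INR (S j)); nra).
    set (phi1 := fun u => sum_n (fun j => L * (u * exp (- k j * u))) n).
    set (phi2 := fun u => exp (- k n * u)).
    assert (Hex1 : forall j, ex_RInt (fun u => L * (u * exp (- k j * u))) 0 U).
    { intros j. apply ex_RInt_der. intros y. auto_derive. auto. }
    destruct (RInt_sum_n (fun j u => L * (u * exp (- k j * u))) 0 U n (fun j _ => Hex1 j)) as [Hexp1 Hphi1].
    assert (Hexp2 : ex_RInt phi2 0 U) by (apply ex_RInt_der; intros y; unfold phi2; auto_derive; auto).
    assert (Hcmp : RInt (fun u => sum_n (fun q => g q u) N) 0 U <= RInt (fun u => plus (phi1 u) (phi2 u)) 0 U).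
    { apply RInt_le; auto. apply (ex_RInt_plus phi1 phi2); auto.
      intros u Hu. unfold g, c. rewrite (g_sum_identity m N u (fun u => u) Hm). fold lm.
      unfold phi1, phi2, k. unfold plus; simpl (AbelianMonoid.plus _ _).
      pose proof (pointwise_ii m N n u Hm2 ltac:(lra)). fold lm L in H. exact H. }
    rewrite (RInt_plus phi1 phi2) in Hcmp by auto. unfold plus in Hcmp; simpl (AbelianMonoid.plus _ _) in Hcmp.
    unfold phi1 in Hcmp. rewrite Hphi1 in Hcmp.
    unfold phi2 in Hcmp. rewrite (is_RInt_unique _ _ _ _ (int_exp (k n) U (Hk n))) in Hcmp.
    rewrite Hsum in Hcmp.
    assert (Hb1 : sum_n (fun j => RInt (fun u => L * (u * exp (- k j * u))) 0 U) n <= sum_n (fun j => L / k j ^ 2) n).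
    { apply sum_n_Rle. intros j _. rewrite (RInt_scal_R L _ 0 U _ (int_u_exp (k j) U (Hk j))).
      pose proof (exp_pos (- k j * U)). pose proof (Hk j).
      assert (0 <= U / k j + 1 / k j ^ 2) by (apply Rplus_le_le_0_compat; apply Rdiv_le_0_compat; try nra; apply pow_lt; auto).
      assert (0 <= L * (exp (- k j * U) * (U / k j + 1 / k j ^ 2))) by (apply Rmult_le_pos; [lra|apply Rmult_le_pos; lra]).
      replace (L * (1 / k j ^ 2 - exp (- k j * U) * (U / k j + 1 / k j ^ 2))) with
        (L / k j ^ 2 - L * (exp (- k j * U) * (U / k j + 1 / k j ^ 2))) by (unfold Rdiv; ring).
      lra. }
    assert (Hb2 : (1 - exp (- k n * U)) / k n <= 1 / k n).
    { unfold Rdiv. apply Rmult_le_compat_r. left; apply Rinv_0_lt_compat; auto. pose proof (exp_pos (- k n * U)). lra. }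
    assert (Hb3 : lm * sum_n (fun j => L / k j ^ 2) n <= SS).
    { rewrite <- sum_n_Rmult_l. eapply Rle_trans; [|apply (partial_le_series a n Ha0 Hexa)].
      right. apply sum_n_ext_R. intros j. unfold a, k. rewrite Hlm.
      pose proof (pos_INR (S j)). assert (0 < x + INR (S j)) by lra.
      assert (0 < x * L + INR (S j) * L) by nra. field. repeat split; lra. }
    assert (Hb4 : lm * (1 / k n) <= eps / 2).
    { unfold k. pose proof (pos_INR (S n)). rewrite S_INR in *.
      apply Rmult_le_reg_r with ((lm + (INR n + 1) * L) * 2 / eps). apply Rmult_lt_0_compat; [nra|]. apply Rinv_0_lt_compat; lra.
      replace (lm * (1 / (lm + (INR n + 1) * L)) * ((lm + (INR n + 1) * L) * 2 / eps)) with (2 * lm / eps) by (field; nra).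
      replace (eps / 2 * ((lm + (INR n + 1) * L) * 2 / eps)) with (lm + (INR n + 1) * L) by (field; lra).
      assert (2 * lm / (L * eps) * L <= (INR n + 1) * L) by (apply Rmult_le_compat_r; lra).
      replace (2 * lm / (L * eps) * L) with (2 * lm / eps) in H0 by (field; lra). lra. }
    assert (Hterm : forall q, (q <= N)%nat ->
      term m q <= RInt (g q) 0 U + vonMangoldt q / INR q * (exp (- L * U) * (U / L + 1 / L ^ 2))).
    { intros q Hq. rewrite Hg. destruct Nat.eq_dec.
      - subst. unfold term. rewrite Lam_0. unfold Rdiv. lra.
      - assert (HcL := Hcq q ltac:(lia)). assert (Hq0 : 0 < INR q) by (apply lt_0_INR; lia).
        assert (Et : term m q = vonMangoldt q / INR q * (1 / c q ^ 2)).
        { unfold term. change (ln (INR m * INR q)) with (c q). field. split; lra. }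
        rewrite Et. rewrite <- Rmult_plus_distr_l. apply Rmult_le_compat_l.
        unfold Rdiv; apply Rmult_le_pos; [apply Lam_ge0|left; apply Rinv_0_lt_compat; auto].
        unfold K2.
        assert (exp (- c q * U) <= exp (- L * U)) by (apply exp_mono; nra).
        assert (U / c q <= U / L) by (unfold Rdiv; apply Rmult_le_compat_l; auto; apply Rinv_le_contravar; lra).
        assert (1 / c q ^ 2 <= 1 / L ^ 2).
        { unfold Rdiv. apply Rmult_le_compat_l. lra. apply Rinv_le_contravar. apply pow_lt; auto. simpl. nra. }
        assert (0 <= U / c q + 1 / c q ^ 2) by (apply Rplus_le_le_0_compat; apply Rdiv_le_0_compat; try lra; apply pow_lt; lra).
        pose proof (exp_pos (- c q * U)).
        assert (exp (- c q * U) * (U / c q + 1 / c q ^ 2) <= exp (- L * U) * (U / L + 1 / L ^ 2)) by (apply Rmult_le_compat; lra).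
        lra. }
    assert (HP : sum_n (term m) N <= sum_n (fun q => RInt (g q) 0 U) N + T N * (exp (- L * U) * (U / L + 1 / L ^ 2))).
    { unfold T. rewrite <- sum_n_Rmult_r, <- sum_n_Rplus. apply sum_n_Rle. auto. }
    assert (HPl : lm * sum_n (term m) N <= lm * (sum_n (fun q => RInt (g q) 0 U) N) + lm * T N * (exp (- L * U) * (U / L + 1 / L ^ 2))).
    { rewrite Rmult_assoc, <- Rmult_plus_distr_l. apply Rmult_le_compat_l; lra. }
    assert (HRl : lm * sum_n (fun q => RInt (g q) 0 U) N <= lm * (sum_n (fun j => L / k j ^ 2) n + 1 / k n)).
    { apply Rmult_le_compat_l. lra. eapply Rle_trans. apply Hcmp. apply Rplus_le_compat; auto. }
    rewrite Rmult_plus_distr_l in HRl.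
    eapply Rle_trans. apply HPl.
    apply Rle_trans with ((SS + eps / 2) + eps / 2); [|lra].
    apply Rplus_le_compat. eapply Rle_trans. apply HRl. apply Rplus_le_compat; auto.
    exact HUe. }
  assert (Hterm0 : forall q, 0 <= term m q) by apply term_nonneg.
  destruct (series_bounds (term m) 0 (SS / lm) Hterm0) as [Hex Hb].
  { intros N. apply Rmult_le_reg_l with lm; auto. replace (lm * (SS / lm)) with SS by (field; lra). auto. }
  { intros eps He. exists 0%nat. rewrite sum_n_0. specialize (Hterm0 0%nat). lra. }
  split; auto. split; auto. split.
  { apply Rmult_le_reg_r with (/ lm). apply Rinv_0_lt_compat; auto.
    replace (lm * Series (term m) * / lm) with (Series (term m)) by (field; lra). unfold Rdiv in Hb. lra. }
  split; auto.
  apply Rmult_le_reg_r with (x + 1/2). lra. unfold Rdiv. rewrite Rmult_assoc, Rinv_l by lra. lra.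
Qed.

Theorem lemma3p3 :
  (* (i) *)
  (exists C : R,
     (forall (m : nat) (y z : R), (1 <= m)%nat -> 2 <= y -> y <= z ->
        Rabs (sum_between (term m) y z
              - (1 / ln (INR m * y) - 1 / ln (INR m * z)))
        <= C / (ln (INR m * y)) ^ 2)
     /\
     (forall (m : nat) (y : R), (1 <= m)%nat -> 2 <= y ->
        ex_series (from_y (term m) y) /\
        Rabs (Series (from_y (term m) y) - 1 / ln (INR m * y))
        <= C / (ln (INR m * y)) ^ 2))
  /\
  (* (ii) *)
  (forall (m : nat) (x : R), (1 <= m)%nat -> 1 <= x -> INR m = Rpower 2 x ->
     ex_series (term m) /\
     ex_series (fun j : nat => x / (x + INR (S j)) ^ 2) /\
     ln (INR m) * Series (term m)
       <= Series (fun j : nat => x / (x + INR (S j)) ^ 2) /\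
     Series (fun j : nat => x / (x + INR (S j)) ^ 2) <= x / (x + 1 / 2) /\
     x / (x + 1 / 2) <= 1)
  /\
  (* (iii) *)
  (forall m : nat, (1 <= m)%nat ->
     let f := fun q : nat =>
       vonMangoldt q / (INR q * ln (INR m * INR q) * ln (2 * INR m * INR q)) in
     ex_series f /\ Series f <= 1 / ln (2 * INR m)).
Proof.
  split.
  - exists 11. split.
    + intros m y z Hm Hy Hyz. apply part_i_a; auto.
    + intros m y Hm Hy. apply part_i_b; auto.
  - split.
    + intros m x Hm Hx Hmx. apply part_ii; auto.
    + intros m Hm. exact (part_iii m Hm).
Qed.
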